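(* Let $\gamma:[0,1]\to[0,1]^2$ be a continuous curve with $\gamma(0)=(0,0)$, $\gamma(1)=(1,1)$, and $\pi_2\circ\gamma\in\mathcal U$. Then for each $n\in\mathbb{N}$ there exist continuous functions $y,x_1,\ldots,x_n:[0,1]\to[0,1]$ such that, with $x_0(t)\equiv 0$: (i) $(x_i(t),\,x_{i-1}(t)+y(t))\in\gamma([0,1])$ for all $t\in[0,1]$ and all $i=1,\ldots,n$; (ii) $x_i(0)=y(0)=0$ for all $i=1,\ldots,n$; (iii) $(x_n(1),\,x_{n-1}(1)+y(1))=(1,1)$.
   Context: $\pi_2(a,b)=b$ is the projection onto the $y$-axis. A function $f:[0,1]\to\mathbb{R}$ is called piecewise monotone if there is a partition of $[0,1]$ into finitely many subintervals on each of which $f$ is strictly increasing or strictly decreasing. $\mathcal U$ denotes the set of piecewise monotone continuous functions $f:[0,1]\to[0,1]$ with the property that, for every $c\in[0,1]$, the set $f^{-1}(c)$ does not contain both a local maximum point and a local minimum point of $f$. *)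

(* Defs.v *)
From Stdlib Require Import Reals.
Open Scope R_scope.

Definition in01 (x : R) : Prop := 0 <= x <= 1.

Definition cont01 (f : R -> R) : Prop :=
  forall x, in01 x -> forall eps, 0 < eps -> exists delta, 0 < delta /\
    forall y, in01 y -> Rabs (y - x) < delta -> Rabs (f y - f x) < eps.

Definition maps01 (f : R -> R) : Prop := forall x, in01 x -> in01 (f x).

Definition strict_incr_on (f : R -> R) (a b : R) : Prop :=
  forall x y, a <= x -> x < y -> y <= b -> f x < f y.
Definition strict_decr_on (f : R -> R) (a b : R) : Prop :=
  forall x y, a <= x -> x < y -> y <= b -> f y < f x.

Definition piecewise_monotone (f : R -> R) : Prop :=
  exists (k : nat) (a : nat -> R),
    (1 <= k)%nat /\ a 0%nat = 0 /\ a k = 1 /\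
    (forall j, (j < k)%nat -> a j < a (S j)) /\
    (forall j, (j < k)%nat ->
        strict_incr_on f (a j) (a (S j)) \/ strict_decr_on f (a j) (a (S j))).

Definition local_max_pt (f : R -> R) (p : R) : Prop :=
  in01 p /\ exists delta, 0 < delta /\
    forall y, in01 y -> Rabs (y - p) < delta -> f y <= f p.
Definition local_min_pt (f : R -> R) (p : R) : Prop :=
  in01 p /\ exists delta, 0 < delta /\
    forall y, in01 y -> Rabs (y - p) < delta -> f p <= f y.

Definition classU (f : R -> R) : Prop :=
  cont01 f /\ maps01 f /\ piecewise_monotone f /\
  forall c, in01 c ->
    ~ ((exists p, in01 p /\ f p = c /\ local_max_pt f p) /\
       (exists q, in01 q /\ f q = c /\ local_min_pt f q)).

Definition on_curve (gamma : R -> R * R) (P : R * R) : Prop :=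
  exists s, in01 s /\ gamma s = P.

(* Main.v *)
Require Import Defs.
From Stdlib Require Import Reals Lra Lia Psatz Rtopology ClassicalEpsilon List Arith Bool Classical.
Import ListNotations.
Open Scope nat_scope.

Definition DWalk (K r : nat) (lam : nat -> nat) : Prop :=
  lam 0 = 0 /\ lam K = r /\
  (forall m, m < K -> lam (S m) = S (lam m) \/ lam m = S (lam (S m))) /\
  (forall m, m <= K -> lam m <= r).

Definition st := (nat * nat * bool * bool)%type.
Definition mv (a : bool) (m : nat) := if a then S m else pred m.
Definition orng (K : nat) (a : bool) (m : nat) := (a = false -> 1 <= m) /\ (a = true -> m < K).

Definition Valid K N (lam ell : nat -> nat) (s : st) : Prop :=
  let '(m, i, a, b) := s in
  m <= K /\ i <= N /\ orng K a m /\ orng N b i /\ lam m = ell i /\ lam (mv a m) = ell (mv b i).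

Definition vert (s : st) : nat * nat := let '(m, i, _, _) := s in (m, i).
Definition Term K N (s : st) : Prop := vert s = (0, 0) \/ vert s = (K, N).

Definition fturn K (lam : nat -> nat) m := (0 <? m) && (m <? K) && (lam (pred m) =? lam (S m)).
Definition gcross N (ell : nat -> nat) i := (0 <? i) && (i <? N) && negb (ell (pred i) =? ell (S i)).

Definition rule K N lam ell (m i : nat) (a b : bool) : bool * bool :=
  if fturn K lam m then (negb a, b) else if gcross N ell i then (negb a, negb b) else (a, negb b).

Definition next K N lam ell (s : st) : st :=
  let '(m, i, a, b) := s in
  let '(a', b') := rule K N lam ell m i a b in (mv a' m, mv b' i, negb a', negb b').

Definition Rev (s : st) : st := let '(m, i, a, b) := s in (mv a m, mv b i, negb a, negb b).

Lemma mv_inv K a m : orng K a m -> mv (negb a) (mv a m) = m.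
Proof. unfold orng, mv; destruct a; simpl; intros [H1 H2]; [reflexivity|]. specialize (H1 eq_refl); lia. Qed.

Lemma orng_mv K a m : m <= K -> orng K a m -> mv a m <= K /\ orng K (negb a) (mv a m).
Proof. unfold orng, mv; destruct a; simpl; intros H [H1 H2]; split; try split; intros; try discriminate.
  specialize (H2 eq_refl); lia. lia. specialize (H1 eq_refl); lia. specialize (H1 eq_refl); lia. Qed.

Lemma valid_out K N lam ell m i a b : m <= K -> i <= N -> lam m = ell i ->
  orng K a m -> orng N b i -> lam (mv a m) = ell (mv b i) ->
  Valid K N lam ell (mv a m, mv b i, negb a, negb b).
Proof.
  intros Hm Hi Hl Ha Hb Hl2. destruct (orng_mv K a m Hm Ha) as [A1 A2].
  destruct (orng_mv N b i Hi Hb) as [B1 B2]. simpl.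
  rewrite (mv_inv K a m Ha), (mv_inv N b i Hb). tauto.
Qed.

Lemma adj_int K r lam m : DWalk K r lam -> 0 < m -> m < K ->
  (lam (pred m) = S (lam m) \/ lam m = S (lam (pred m))) /\
  (lam (S m) = S (lam m) \/ lam m = S (lam (S m))).
Proof.
  intros [H0 [HK [Ha Hr]]] H1 H2. split.
  - destruct (Ha (pred m) ltac:(lia)) as [E|E]; replace (S (pred m)) with m in E by lia; lia.
  - apply Ha; lia.
Qed.

Lemma K_pos K r lam : DWalk K r lam -> 1 <= r -> 1 <= K.
Proof. intros [H0 [HK _]] Hr. destruct K; lia. Qed.

Lemma lam_top K r lam m : DWalk K r lam -> 0 < m -> m < K -> lam m = r -> lam (pred m) = lam (S m).
Proof. intros HD H1 H2 E. destruct (adj_int K r lam m HD H1 H2) as [A B].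
  destruct HD as [_ [_ [_ Hr]]]. pose proof (Hr (pred m) ltac:(lia)). pose proof (Hr (S m) ltac:(lia)). lia. Qed.

Lemma lam_bot K r lam m : DWalk K r lam -> 0 < m -> m < K -> lam m = 0 -> lam (pred m) = lam (S m).
Proof. intros HD H1 H2 E. destruct (adj_int K r lam m HD H1 H2) as [A B]. lia. Qed.

Lemma rule_ok K N r lam ell m i a b : DWalk K r lam -> DWalk N r ell -> 1 <= r ->
  Valid K N lam ell (m, i, a, b) -> ~ Term K N (m, i, a, b) ->
  let ab := rule K N lam ell m i a b in
  (orng K (fst ab) m) /\ (orng N (snd ab) i) /\
  (lam (mv (fst ab) m) = ell (mv (snd ab) i)).
Proof.
  intros HF HG Hr. simpl.
  intros [Hm [Hi [Ha [Hb [Hl Hl2]]]]] HT. unfold Term in HT; simpl in HT.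
  pose proof HF as [F0 [FK [_ Fr]]]. pose proof HG as [G0 [GK [_ Gr]]].
  unfold rule. destruct (fturn K lam m) eqn:Ef.
  - unfold fturn in Ef. apply andb_true_iff in Ef as [Ef E3]. apply andb_true_iff in Ef as [E1 E2].
    apply Nat.ltb_lt in E1, E2. apply Nat.eqb_eq in E3.
    simpl; refine (conj _ (conj _ _)); auto.
    unfold orng; split; intros; lia.
    rewrite <- Hl2. destruct a; simpl; auto.
  - destruct (gcross N ell i) eqn:Eg.
    + unfold gcross in Eg. apply andb_true_iff in Eg as [Eg E3]. apply andb_true_iff in Eg as [E1 E2].
      apply Nat.ltb_lt in E1, E2. apply negb_true_iff, Nat.eqb_neq in E3.
      pose proof (adj_int N r ell i HG E1 E2) as [GA GB].
      assert (Hm0 : m <> 0).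
      { intro; subst m. rewrite F0 in Hl. lia. }
      assert (HmK : m <> K).
      { intro; subst m. rewrite FK in Hl. pose proof (Gr (pred i) ltac:(lia)). pose proof (Gr (S i) ltac:(lia)). lia. }
      unfold fturn in Ef.
      assert (E4 : lam (pred m) <> lam (S m)).
      { intro E. rewrite (proj2 (Nat.ltb_lt 0 m)), (proj2 (Nat.ltb_lt m K)), (proj2 (Nat.eqb_eq _ _) E) in Ef by lia. discriminate. }
      pose proof (adj_int K r lam m HF ltac:(lia) ltac:(lia)) as [FA FB].
      simpl; refine (conj _ (conj _ _)); auto.
      unfold orng; split; intros; lia.
      unfold orng; split; intros; lia.
      destruct a, b; simpl in *; lia.
    + assert (Hnt : ~ (0 < m < K /\ lam (pred m) = lam (S m))).
      { intros [[A B] C]. unfold fturn in Ef.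
        rewrite (proj2 (Nat.ltb_lt 0 m)), (proj2 (Nat.ltb_lt m K)), (proj2 (Nat.eqb_eq _ _) C) in Ef by lia. discriminate. }
      assert (Hi0 : i <> 0).
      { intro; subst i. rewrite G0 in Hl.
        destruct (Nat.eq_dec m 0) as [->|]; [tauto|].
        destruct (Nat.eq_dec m K) as [->|]; [lia|].
        apply Hnt; split; [lia|]. apply (lam_bot K r lam m HF); lia. }
      assert (HiN : i <> N).
      { intro; subst i. rewrite GK in Hl.
        destruct (Nat.eq_dec m K) as [->|]; [tauto|].
        destruct (Nat.eq_dec m 0) as [->|]; [lia|].
        apply Hnt; split; [lia|]. apply (lam_top K r lam m HF); lia. }
      assert (E4 : ell (pred i) = ell (S i)).
      { unfold gcross in Eg. rewrite (proj2 (Nat.ltb_lt 0 i)), (proj2 (Nat.ltb_lt i N)) in Eg by lia.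
        simpl in Eg. apply negb_false_iff, Nat.eqb_eq in Eg. auto. }
      simpl; refine (conj _ (conj _ _)); auto.
      unfold orng; split; intros; lia.
      rewrite Hl2. destruct b; simpl; auto.
Qed.

Lemma next_valid K N r lam ell s : DWalk K r lam -> DWalk N r ell -> 1 <= r ->
  Valid K N lam ell s -> ~ Term K N s -> Valid K N lam ell (next K N lam ell s).
Proof.
  intros HF HG Hr. destruct s as [[[m i] a] b]. intros HV HT.
  destruct (rule_ok K N r lam ell m i a b HF HG Hr HV HT) as [A [B C]].
  simpl. destruct (rule K N lam ell m i a b) as [a' b'] eqn:E. simpl in *.
  destruct HV as [Hm [Hi [_ [_ [Hl _]]]]].
  apply valid_out; auto.
Qed.

Lemma rule_invol K N lam ell m i a b :
  rule K N lam ell m i (fst (rule K N lam ell m i a b)) (snd (rule K N lam ell m i a b)) = (a, b).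
Proof. unfold rule. destruct (fturn K lam m), (gcross N ell i); simpl; rewrite ?negb_involutive; auto. Qed.

Lemma rule_ne K N lam ell m i a b : rule K N lam ell m i a b <> (a, b).
Proof. unfold rule. destruct (fturn K lam m), (gcross N ell i), a, b; simpl; discriminate. Qed.

Lemma next_back K N r lam ell s : DWalk K r lam -> DWalk N r ell -> 1 <= r ->
  Valid K N lam ell s -> ~ Term K N s ->
  Rev (next K N lam ell s) = (fst (fst (fst s)), snd (fst (fst s)),
     fst (rule K N lam ell (fst (fst (fst s))) (snd (fst (fst s))) (snd (fst s)) (snd s)),
     snd (rule K N lam ell (fst (fst (fst s))) (snd (fst (fst s))) (snd (fst s)) (snd s))).
Proof.
  intros HF HG Hr. destruct s as [[[m i] a] b]. intros HV HT.
  destruct (rule_ok K N r lam ell m i a b HF HG Hr HV HT) as [A [B C]].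
  simpl. destruct (rule K N lam ell m i a b) as [a' b'] eqn:E. simpl in *.
  rewrite (mv_inv K a' m A), (mv_inv N b' i B), !negb_involutive. reflexivity.
Qed.

Lemma next_inj K N r lam ell s1 s2 : DWalk K r lam -> DWalk N r ell -> 1 <= r ->
  Valid K N lam ell s1 -> ~ Term K N s1 -> Valid K N lam ell s2 -> ~ Term K N s2 ->
  next K N lam ell s1 = next K N lam ell s2 -> s1 = s2.
Proof.
  intros HF HG Hr V1 T1 V2 T2 E.
  pose proof (next_back K N r lam ell s1 HF HG Hr V1 T1) as B1.
  pose proof (next_back K N r lam ell s2 HF HG Hr V2 T2) as B2.
  rewrite E in B1. rewrite B1 in B2. clear B1.
  destruct s1 as [[[m1 i1] a1] b1], s2 as [[[m2 i2] a2] b2]. simpl in B2.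
  inversion B2; subst m2 i2.
  pose proof (rule_invol K N lam ell m1 i1 a1 b1) as R1.
  pose proof (rule_invol K N lam ell m1 i1 a2 b2) as R2.
  destruct (rule K N lam ell m1 i1 a1 b1) as [x1 y1], (rule K N lam ell m1 i1 a2 b2) as [x2 y2].
  simpl in *. subst x2 y2. rewrite R1 in R2. inversion R2; subst; reflexivity.
Qed.

Lemma Rev_valid K N lam ell s : Valid K N lam ell s -> Valid K N lam ell (Rev s).
Proof. destruct s as [[[m i] a] b]. intros [Hm [Hi [Ha [Hb [Hl Hl2]]]]]. simpl.
  apply valid_out; auto. Qed.

Lemma Rev_invol K N lam ell s : Valid K N lam ell s -> Rev (Rev s) = s.
Proof. destruct s as [[[m i] a] b]. intros [Hm [Hi [Ha [Hb [Hl Hl2]]]]]. simpl.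
  rewrite (mv_inv K a m Ha), (mv_inv N b i Hb), !negb_involutive; auto. Qed.

Lemma next_Rev_next K N r lam ell s : DWalk K r lam -> DWalk N r ell -> 1 <= r ->
  Valid K N lam ell s -> ~ Term K N s ->
  next K N lam ell (Rev (next K N lam ell s)) = Rev s.
Proof.
  intros HF HG Hr HV HT. rewrite (next_back K N r lam ell s HF HG Hr HV HT).
  destruct s as [[[m i] a] b]. simpl.
  pose proof (rule_invol K N lam ell m i a b) as R.
  destruct (rule K N lam ell m i a b) as [x y]. simpl in *. rewrite R. reflexivity.
Qed.

Lemma next_ne_Rev K N lam ell s : next K N lam ell s <> Rev s.
Proof. destruct s as [[[m i] a] b]. simpl. pose proof (rule_ne K N lam ell m i a b).
  destruct (rule K N lam ell m i a b) as [x y]. intro E. inversion E.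
  apply H. destruct x, y, a, b; simpl in *; congruence. Qed.

Lemma Rev_ne s : Rev s <> s.
Proof. destruct s as [[[m i] a] b]. simpl. intro E; inversion E. destruct a; discriminate. Qed.

Fixpoint it K N lam ell (j : nat) : st :=
  match j with 0 => (1, 1, false, false) | S j => next K N lam ell (it K N lam ell j) end.

Lemma min_ex (P : nat -> Prop) : (exists n, P n) -> exists n, P n /\ forall k, k < n -> ~ P k.
Proof.
  intros [n Hn]. induction n as [n IH] using (well_founded_induction lt_wf).
  destruct (classic (exists k, k < n /\ P k)) as [[k [Hk Pk]]|Hno].
  - apply (IH k Hk Pk).
  - exists n; split; auto. intros k Hk Pk; apply Hno; eauto.
Qed.

Lemma s0_valid K N r lam ell : DWalk K r lam -> DWalk N r ell -> 1 <= r -> Valid K N lam ell (1, 1, false, false).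
Proof.
  intros HF HG Hr. pose proof (K_pos K r lam HF Hr). pose proof (K_pos N r ell HG Hr).
  destruct HF as [F0 [FK [Fa _]]], HG as [G0 [GK [Ga _]]].
  destruct (Fa 0 ltac:(lia)), (Ga 0 ltac:(lia)); simpl; unfold orng; repeat split; intros; try lia; try discriminate.
Qed.

Lemma it_valid K N r lam ell T : DWalk K r lam -> DWalk N r ell -> 1 <= r ->
  (forall j, j < T -> ~ Term K N (it K N lam ell j)) -> forall j, j <= T -> Valid K N lam ell (it K N lam ell j).
Proof.
  intros HF HG Hr HT j. induction j; intros Hj.
  - apply (s0_valid K N r); auto.
  - simpl. apply (next_valid K N r); [auto|auto|auto|apply IHj; lia|apply HT; lia].
Qed.

Lemma it_distinct K N r lam ell B : DWalk K r lam -> DWalk N r ell -> 1 <= r ->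
  (forall j, j <= B -> ~ Term K N (it K N lam ell j)) ->
  forall p q, p < q -> q <= B -> it K N lam ell p <> it K N lam ell q.
Proof.
  intros HF HG Hr HT.
  assert (HV : forall j, j <= B -> Valid K N lam ell (it K N lam ell j)).
  { apply (it_valid K N r); auto. intros; apply HT; lia. }
  induction p; intros q Hpq HqB E.
  - destruct q as [|q]; [lia|]. simpl in E.
    pose proof (next_back K N r lam ell (it K N lam ell q) HF HG Hr (HV q ltac:(lia)) (HT q ltac:(lia))) as Bk.
    rewrite <- E in Bk. simpl in Bk. inversion Bk.
    apply (HT q ltac:(lia)). left. destruct (it K N lam ell q) as [[[m i] a] b]. simpl in *. congruence.
  - destruct q as [|q]; [lia|]. simpl in E.
    apply next_inj with (r := r) in E; auto.
    apply (IHp q); auto; lia. apply HV; lia. apply HT; lia. apply HV; lia. apply HT; lia.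
Qed.

Definition univ K N : list st :=
  list_prod (list_prod (list_prod (seq 0 (S K)) (seq 0 (S N))) [true; false]) [true; false].

Lemma univ_in K N lam ell s : Valid K N lam ell s -> In s (univ K N).
Proof. destruct s as [[[m i] a] b]. intros [Hm [Hi _]]. unfold univ.
  apply in_prod; [apply in_prod; [apply in_prod|]|].
  apply in_seq; lia. apply in_seq; lia. destruct a; simpl; auto. destruct b; simpl; auto. Qed.

Lemma univ_len K N : length (univ K N) = 4 * (S K * S N).
Proof. unfold univ, st. rewrite length_prod, length_prod, length_prod, !length_seq. simpl. lia. Qed.

Lemma exists_term K N r lam ell : DWalk K r lam -> DWalk N r ell -> 1 <= r ->
  exists j, Term K N (it K N lam ell j).
Proof.
  intros HF HG Hr. set (B := 4 * (S K * S N)).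
  destruct (classic (exists j, j <= B /\ Term K N (it K N lam ell j))) as [[j [_ Hj]]|Hno]; [eauto|].
  exfalso.
  assert (HT : forall j, j <= B -> ~ Term K N (it K N lam ell j)) by (intros j Hj Ht; apply Hno; eauto).
  assert (HV : forall j, j <= B -> Valid K N lam ell (it K N lam ell j)).
  { apply (it_valid K N r); auto. intros; apply HT; lia. }
  set (l := map (it K N lam ell) (seq 0 (S B))).
  assert (HL : length l = S B) by (unfold l; rewrite length_map, length_seq; auto).
  assert (ND : NoDup l).
  { apply (NoDup_nth l (1,1,false,false)). intros p q Hp Hq E. rewrite HL in Hp, Hq.
    assert (Hn : forall p, p < S B -> nth p l (1,1,false,false) = it K N lam ell p).
    { intros x Hx. unfold l. rewrite (nth_indep _ _ (it K N lam ell 0)) by (rewrite length_map, length_seq; lia).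
      rewrite map_nth, seq_nth by lia. reflexivity. }
    rewrite (Hn p Hp), (Hn q Hq) in E.
    destruct (Nat.lt_trichotomy p q) as [H|[H|H]]; auto.
    exfalso; apply (it_distinct K N r lam ell B HF HG Hr HT p q H ltac:(lia) E).
    exfalso; apply (it_distinct K N r lam ell B HF HG Hr HT q p H ltac:(lia)); symmetry; exact E. }
  assert (INC : incl l (univ K N)).
  { intros s Hs. unfold l in Hs. apply in_map_iff in Hs as [j [<- Hj]]. apply in_seq in Hj.
    apply (univ_in K N lam ell). apply HV; lia. }
  pose proof (NoDup_incl_length ND INC). rewrite HL, univ_len in H. unfold B in H. lia.
Qed.

Theorem dtrail K N r lam ell : DWalk K r lam -> DWalk N r ell -> 1 <= r ->
  exists T, (forall j, j <= T -> Valid K N lam ell (it K N lam ell j)) /\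
    (forall j, j < T -> ~ Term K N (it K N lam ell j)) /\ vert (it K N lam ell T) = (K, N).
Proof.
  intros HF HG Hr.
  destruct (min_ex _ (exists_term K N r lam ell HF HG Hr)) as [T [HTT HT]].
  assert (HV : forall j, j <= T -> Valid K N lam ell (it K N lam ell j)) by (apply (it_valid K N r); auto).
  exists T; split; auto; split; auto.
  destruct HTT as [H0|]; auto. exfalso.
  assert (T0 : T <> 0). { intro; subst T. simpl in H0. discriminate. }
  assert (Eend : it K N lam ell T = Rev (it K N lam ell 0)).
  { pose proof (HV T ltac:(lia)) as V. destruct (it K N lam ell T) as [[[m i] a] b]. simpl in H0, V |- *.
    inversion H0; subst m i. destruct V as [_ [_ [[Ha1 _] [[Hb1 _] _]]]].
    destruct a; [|specialize (Ha1 eq_refl); lia]. destruct b; [|specialize (Hb1 eq_refl); lia]. reflexivity. }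
  assert (Pal : forall j, j <= T -> it K N lam ell j = Rev (it K N lam ell (T - j))).
  { induction j; intros Hj.
    - rewrite Nat.sub_0_r, Eend, (Rev_invol K N lam ell _ (HV 0 ltac:(lia))); reflexivity.
    - simpl. rewrite IHj by lia.
      replace (T - j) with (S (T - S j)) by lia. simpl.
      apply (next_Rev_next K N r); [auto|auto|auto|apply HV; lia|apply HT; lia]. }
  destruct (Nat.Even_or_Odd T) as [[h Hh]|[h Hh]].
  - pose proof (Pal h ltac:(lia)). replace (T - h) with h in H by lia.
    apply (Rev_ne (it K N lam ell h)); auto.
  - pose proof (Pal (S h) ltac:(lia)). replace (T - S h) with h in H by lia.
    simpl in H. apply (next_ne_Rev K N lam ell (it K N lam ell h)); auto.
Qed.

Open Scope R_scope.

Definition clamp (x : R) : R := Rmax 0 (Rmin 1 x).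

Lemma clamp_in x : in01 (clamp x).
Proof. unfold clamp, in01, Rmax, Rmin.
  destruct (Rle_dec 1 x); destruct (Rle_dec 0 _); lra. Qed.

Lemma clamp_id x : in01 x -> clamp x = x.
Proof. unfold clamp, in01, Rmax, Rmin; intros.
  destruct (Rle_dec 1 x); destruct (Rle_dec 0 _); lra. Qed.

Lemma clamp_lip x y : Rabs (clamp y - clamp x) <= Rabs (y - x).
Proof. unfold clamp, Rmax, Rmin.
  destruct (Rle_dec 1 x); destruct (Rle_dec 1 y);
  repeat match goal with |- context [Rle_dec ?a ?b] => destruct (Rle_dec a b) end;
  unfold Rabs; repeat match goal with |- context [Rcase_abs ?a] => destruct (Rcase_abs a) end; lra. Qed.

Lemma cont01_ext f : cont01 f -> continuity (fun x => f (clamp x)).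
Proof.
  intros Hf x. unfold continuity_pt, continue_in, limit1_in, limit_in; simpl; unfold R_dist.
  intros eps Heps.
  destruct (Hf (clamp x) (clamp_in x) eps Heps) as [d [Hd H]].
  exists d; split; auto. intros y [_ Hy].
  apply H. apply clamp_in. pose proof (clamp_lip x y). lra.
Qed.

Lemma ivt01 f a b c : cont01 f -> 0 <= a -> a <= b -> b <= 1 ->
  (f a <= c <= f b \/ f b <= c <= f a) -> exists z, a <= z <= b /\ f z = c.
Proof.
  intros Hf Ha Hab Hb Hc.
  assert (HF : continuity (fun x => f (clamp x) - c)).
  { apply continuity_minus. apply cont01_ext; auto. apply continuity_const. intros ? ?; auto. }
  assert (Hp : (fun x => f (clamp x) - c) a * (fun x => f (clamp x) - c) b <= 0).
  { simpl. rewrite !clamp_id by (unfold in01; lra).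
    destruct Hc; nra. }
  destruct (IVT_cor _ a b HF Hab Hp) as [z [Hz Hz2]].
  exists z; split; auto. rewrite clamp_id in Hz2 by (unfold in01; lra). lra.
Qed.

Lemma cont01_const c : cont01 (fun _ => c).
Proof. intros x _ e He; exists 1; split; [lra|]; intros; rewrite Rminus_diag, Rabs_R0; lra. Qed.

Lemma cont01_id : cont01 (fun t => t).
Proof. intros x _ e He; exists e; split; auto. Qed.

Lemma cont01_plus f g : cont01 f -> cont01 g -> cont01 (fun t => f t + g t).
Proof.
  intros Hf Hg x Hx e He.
  destruct (Hf x Hx (e/2)) as [d1 [Hd1 H1]]; [lra|].
  destruct (Hg x Hx (e/2)) as [d2 [Hd2 H2]]; [lra|].
  exists (Rmin d1 d2); split; [apply Rmin_pos; auto|].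
  intros y Hy Hyx. pose proof (Rmin_l d1 d2). pose proof (Rmin_r d1 d2).
  specialize (H1 y Hy ltac:(lra)). specialize (H2 y Hy ltac:(lra)).
  replace (f y + g y - (f x + g x)) with ((f y - f x) + (g y - g x)) by ring.
  eapply Rle_lt_trans; [apply Rabs_triang|]. lra.
Qed.

Lemma cont01_scal k f : cont01 f -> cont01 (fun t => k * f t).
Proof.
  intros Hf x Hx e He.
  destruct (Hf x Hx (e / (Rabs k + 1))) as [d [Hd H]].
  { apply Rdiv_lt_0_compat; auto. pose proof (Rabs_pos k); lra. }
  exists d; split; auto. intros y Hy Hyx. specialize (H y Hy Hyx).
  replace (k * f y - k * f x) with (k * (f y - f x)) by ring.
  rewrite Rabs_mult. pose proof (Rabs_pos k).
  apply Rle_lt_trans with (Rabs k * (e / (Rabs k + 1))).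
  apply Rmult_le_compat_l; lra.
  apply Rlt_le_trans with ((Rabs k + 1) * (e / (Rabs k + 1))).
  apply Rmult_lt_compat_r; [apply Rdiv_lt_0_compat|]; lra.
  right; field; lra.
Qed.

Lemma cont01_ext_eq f g : cont01 f -> (forall t, in01 t -> f t = g t) -> cont01 g.
Proof. intros Hf He x Hx e Hep. destruct (Hf x Hx e Hep) as [d [Hd H]].
  exists d; split; auto; intros y Hy Hyx. rewrite <- !He by auto. auto. Qed.

Lemma cont01_opp f : cont01 f -> cont01 (fun t => - f t).
Proof. intros H. apply cont01_ext_eq with (fun t => (-1) * f t).
  apply cont01_scal; auto. intros; ring. Qed.

Lemma cont01_comp f h : cont01 f -> cont01 h -> maps01 h -> cont01 (fun t => f (h t)).
Proof.
  intros Hf Hh Hm x Hx e He.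
  destruct (Hf (h x) (Hm x Hx) e He) as [d1 [Hd1 H1]].
  destruct (Hh x Hx d1 Hd1) as [d2 [Hd2 H2]].
  exists d2; split; [auto|]. intros y Hy Hyx. apply H1; auto.
Qed.

Definition lin (x y t : R) := x + t * (y - x).

Lemma cont01_lin x y : cont01 (lin x y).
Proof. unfold lin. apply cont01_plus. apply cont01_const.
  apply cont01_ext_eq with (fun t => (y - x) * t). apply cont01_scal, cont01_id.
  intros; ring. Qed.

Lemma lin_between x y t : in01 t -> Rmin x y <= lin x y t <= Rmax x y.
Proof. unfold in01, lin, Rmin, Rmax; intros Ht.
  destruct (Rle_dec x y); split; nra. Qed.

Lemma lin_in a b x y t : in01 t -> a <= x <= b -> a <= y <= b -> a <= lin x y t <= b.
Proof. intros Ht Hx Hy. pose proof (lin_between x y t Ht).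
  unfold Rmin, Rmax in *; destruct (Rle_dec x y); lra. Qed.

Lemma maps01_lin x y : in01 x -> in01 y -> maps01 (lin x y).
Proof. intros Hx Hy t Ht. unfold in01 in *. apply lin_in; auto. Qed.

Lemma lin0 x y : lin x y 0 = x. Proof. unfold lin; ring. Qed.
Lemma lin1 x y : lin x y 1 = y. Proof. unfold lin; ring. Qed.

Lemma incr_le f a b x y : strict_incr_on f a b -> a <= x -> x <= y -> y <= b -> f x <= f y.
Proof. intros H Ha Hxy Hb. destruct (Req_dec x y) as [->|]; [lra|]. left; apply H; lra. Qed.

Lemma incr_inj f a b x y : strict_incr_on f a b -> a <= x <= b -> a <= y <= b -> f x = f y -> x = y.
Proof. intros H Hx Hy E. destruct (Rtotal_order x y) as [h|[h|h]]; auto.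
  specialize (H x y ltac:(lra) h ltac:(lra)); lra.
  specialize (H y x ltac:(lra) h ltac:(lra)); lra. Qed.

Lemma incr_rev f a b x y : strict_incr_on f a b -> a <= x <= b -> a <= y <= b -> f x < f y -> x < y.
Proof. intros H Hx Hy E. destruct (Rlt_le_dec x y); auto.
  pose proof (incr_le f a b y x H ltac:(lra) r ltac:(lra)); lra. Qed.

Lemma decr_incr f a b : strict_decr_on f a b -> strict_incr_on (fun x => - f x) a b.
Proof. intros H x y ? ? ?; specialize (H x y); lra. Qed.

Lemma decr_inj f a b x y : strict_decr_on f a b -> a <= x <= b -> a <= y <= b -> f x = f y -> x = y.
Proof. intros H ? ? E. apply (incr_inj _ a b x y (decr_incr _ _ _ H)); auto; lra. Qed.

Lemma mono_inj f a b x y : (strict_incr_on f a b \/ strict_decr_on f a b) -> a <= x <= b -> a <= y <= b -> f x = f y -> x = y.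
Proof. intros [H|H]; [apply incr_inj|apply decr_inj]; auto. Qed.

Lemma track_incr f a b h : cont01 f -> 0 <= a -> a < b -> b <= 1 -> strict_incr_on f a b ->
  cont01 h -> (forall t, in01 t -> f a <= h t <= f b) ->
  exists u, cont01 u /\ forall t, in01 t -> a <= u t <= b /\ f (u t) = h t.
Proof.
  intros Hf Ha Hab Hb Hm Hh Hr.
  assert (Hex : forall t, exists x, in01 t -> a <= x <= b /\ f x = h t).
  { intros t. destruct (classic (in01 t)) as [Ht|Ht].
    - destruct (ivt01 f a b (h t) Hf Ha (Rlt_le _ _ Hab) Hb (or_introl (Hr t Ht))) as [z Hz].
      exists z; auto.
    - exists a; intros; contradiction. }
  apply choice in Hex. destruct Hex as [u Hu]. exists u; split; [|auto].
  intros t0 Ht0 eps Heps.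
  destruct (Hu t0 Ht0) as [Hx0 Hfx0]. set (x0 := u t0) in *.
  set (m1 := if Rle_dec (x0 + eps/2) b then f (x0 + eps/2) - f x0 else 1).
  set (m2 := if Rle_dec a (x0 - eps/2) then f x0 - f (x0 - eps/2) else 1).
  assert (Hm1 : 0 < m1).
  { unfold m1; destruct (Rle_dec (x0 + eps/2) b); [|lra]. assert (f x0 < f (x0 + eps/2)) by (apply Hm; lra). lra. }
  assert (Hm2 : 0 < m2).
  { unfold m2; destruct (Rle_dec a (x0 - eps/2)); [|lra]. assert (f (x0 - eps/2) < f x0) by (apply Hm; lra). lra. }
  destruct (Hh t0 Ht0 (Rmin m1 m2) (Rmin_pos _ _ Hm1 Hm2)) as [d [Hd Hdd]].
  exists d; split; auto. intros t Ht Htd.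
  specialize (Hdd t Ht Htd). destruct (Hu t Ht) as [Hx Hfx].
  rewrite <- Hfx, <- Hfx0 in Hdd.
  pose proof (Rmin_l m1 m2). pose proof (Rmin_r m1 m2).
  apply Rabs_def1.
  - destruct (Rlt_le_dec (u t) (x0 + eps/2)); [lra|].
    exfalso. unfold m1 in *. destruct (Rle_dec (x0 + eps / 2) b); [|lra].
    pose proof (incr_le f a b (x0 + eps/2) (u t) Hm ltac:(lra) r ltac:(lra)).
    apply Rabs_def2 in Hdd. lra.
  - destruct (Rlt_le_dec (x0 - eps/2) (u t)); [lra|].
    exfalso. unfold m2 in *. destruct (Rle_dec a (x0 - eps / 2)); [|lra].
    pose proof (incr_le f a b (u t) (x0 - eps/2) Hm ltac:(lra) r ltac:(lra)).
    apply Rabs_def2 in Hdd. lra.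
Qed.

Lemma track_decr f a b h : cont01 f -> 0 <= a -> a < b -> b <= 1 -> strict_decr_on f a b ->
  cont01 h -> (forall t, in01 t -> f b <= h t <= f a) ->
  exists u, cont01 u /\ forall t, in01 t -> a <= u t <= b /\ f (u t) = h t.
Proof.
  intros Hf Ha Hab Hb Hm Hh Hr.
  destruct (track_incr (fun x => - f x) a b (fun t => - h t)) as [u [Hu1 Hu2]]; auto.
  apply cont01_opp; auto. apply decr_incr; auto. apply cont01_opp; auto.
  intros t Ht; specialize (Hr t Ht); lra.
  exists u; split; auto. intros t Ht; destruct (Hu2 t Ht); split; auto; lra.
Qed.

Lemma track f a b h : cont01 f -> 0 <= a -> a < b -> b <= 1 ->
  (strict_incr_on f a b \/ strict_decr_on f a b) ->
  cont01 h -> (forall t, in01 t -> Rmin (f a) (f b) <= h t <= Rmax (f a) (f b)) ->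
  exists u, cont01 u /\ forall t, in01 t -> a <= u t <= b /\ f (u t) = h t.
Proof.
  intros Hf Ha Hab Hb [Hm|Hm] Hh Hr.
  - apply track_incr; auto. assert (f a < f b) by (apply Hm; lra).
    intros t Ht; specialize (Hr t Ht). unfold Rmin, Rmax in Hr.
    destruct (Rle_dec (f a) (f b)); lra.
  - apply track_decr; auto. assert (f b < f a) by (apply Hm; lra).
    intros t Ht; specialize (Hr t Ht). unfold Rmin, Rmax in Hr.
    destruct (Rle_dec (f a) (f b)); lra.
Qed.

Definition cat (u1 u2 : R -> R) (t : R) : R :=
  if Rle_dec t (1/2) then u1 (2*t) else u2 (2*t - 1).

Lemma cat0 u1 u2 : cat u1 u2 0 = u1 0.
Proof. unfold cat; destruct (Rle_dec 0 (1/2)); [f_equal; ring|lra]. Qed.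
Lemma cat1 u1 u2 : cat u1 u2 1 = u2 1.
Proof. unfold cat; destruct (Rle_dec 1 (1/2)); [lra|f_equal; ring]. Qed.

Lemma cat_cases u1 u2 t : in01 t ->
  (in01 (2*t) /\ cat u1 u2 t = u1 (2*t) /\ t <= 1/2) \/
  (in01 (2*t-1) /\ cat u1 u2 t = u2 (2*t-1) /\ ~ t <= 1/2).
Proof. unfold cat, in01; intros Ht. destruct (Rle_dec t (1/2)); [left|right]; repeat split; auto; lra. Qed.

Lemma cat_cont u1 u2 : cont01 u1 -> cont01 u2 -> u1 1 = u2 0 -> cont01 (cat u1 u2).
Proof.
  intros H1 H2 E x Hx e He.
  destruct (Rtotal_order x (1/2)) as [Hlt|[Heq|Hgt]].
  - destruct (H1 (2*x) ltac:(unfold in01 in *; lra) e He) as [d [Hd H]].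
    exists (Rmin (d/2) (1/2 - x)); split. apply Rmin_pos; lra.
    intros y Hy Hyx. pose proof (Rmin_l (d/2) (1/2 - x)). pose proof (Rmin_r (d/2) (1/2 - x)).
    apply Rabs_def2 in Hyx.
    unfold cat. destruct (Rle_dec y (1/2)); [|lra]. destruct (Rle_dec x (1/2)); [|lra].
    apply H. unfold in01 in *; lra. apply Rabs_def1; lra.
  - subst x. destruct (H1 1 ltac:(unfold in01; lra) e He) as [d1 [Hd1 Ha]].
    destruct (H2 0 ltac:(unfold in01; lra) e He) as [d2 [Hd2 Hb]].
    exists (Rmin d1 d2 / 2); split. pose proof (Rmin_pos _ _ Hd1 Hd2); lra.
    intros y Hy Hyx. pose proof (Rmin_l d1 d2). pose proof (Rmin_r d1 d2).
    apply Rabs_def2 in Hyx.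
    unfold cat. destruct (Rle_dec (1/2) (1/2)); [|lra].
    replace (2 * (1/2)) with 1 by field.
    destruct (Rle_dec y (1/2)).
    + apply Ha. unfold in01 in *; lra. apply Rabs_def1; lra.
    + rewrite E. apply Hb. unfold in01 in *; lra. apply Rabs_def1; lra.
  - destruct (H2 (2*x-1) ltac:(unfold in01 in *; lra) e He) as [d [Hd H]].
    exists (Rmin (d/2) (x - 1/2)); split. apply Rmin_pos; lra.
    intros y Hy Hyx. pose proof (Rmin_l (d/2) (x - 1/2)). pose proof (Rmin_r (d/2) (x-1/2)).
    apply Rabs_def2 in Hyx.
    unfold cat. destruct (Rle_dec y (1/2)); [lra|]. destruct (Rle_dec x (1/2)); [lra|].
    apply H. unfold in01 in *; lra. apply Rabs_def1; lra.
Qed.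

Lemma cat_maps u1 u2 : maps01 u1 -> maps01 u2 -> maps01 (cat u1 u2).
Proof. intros H1 H2 t Ht. destruct (cat_cases u1 u2 t Ht) as [[A [B _]]|[A [B _]]]; rewrite B; auto. Qed.

Lemma cat_rel (f g : R -> R) u1 v1 u2 v2 :
  (forall t, in01 t -> f (u1 t) = g (v1 t)) -> (forall t, in01 t -> f (u2 t) = g (v2 t)) ->
  forall t, in01 t -> f (cat u1 u2 t) = g (cat v1 v2 t).
Proof. intros H1 H2 t Ht. unfold cat. destruct (Rle_dec t (1/2)).
  apply H1; unfold in01 in *; lra. apply H2; unfold in01 in *; lra. Qed.

Lemma cont_neq g s c : cont01 g -> in01 s -> g s <> c ->
  exists d, 0 < d /\ forall t, in01 t -> Rabs (t - s) < d -> g t <> c.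
Proof.
  intros Hg Hs Hne. destruct (Hg s Hs (Rabs (g s - c))) as [d [Hd H]].
  apply Rabs_pos_lt; lra.
  exists d; split; auto. intros t Ht Htd E. specialize (H t Ht Htd). rewrite E in H.
  rewrite <- Rabs_Ropp in H. replace (- (c - g s)) with (g s - c) in H by ring. lra.
Qed.

Lemma last_hit g a b c : cont01 g -> 0 <= a -> a <= b -> b <= 1 -> g a = c ->
  exists s, a <= s <= b /\ g s = c /\ forall t, s < t <= b -> g t <> c.
Proof.
  intros Hg Ha Hab Hb Hc.
  set (E := fun t => a <= t <= b /\ g t = c).
  assert (Hbd : bound E). { exists b; intros x [Hx _]; lra. }
  assert (Hne : exists x, E x). { exists a; split; auto; lra. }
  destruct (completeness E Hbd Hne) as [s [Hs1 Hs2]].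
  assert (Has : a <= s). { apply Hs1; split; auto; lra. }
  assert (Hsb : s <= b). { apply Hs2; intros x [Hx _]; lra. }
  exists s; split; [lra|split].
  - destruct (Req_dec (g s) c) as [|Hne']; auto.
    destruct (cont_neq g s c Hg ltac:(unfold in01; lra) Hne') as [d [Hd H]].
    exfalso.
    assert (Hub : is_upper_bound E (s - d/2)).
    { intros x Hx. destruct (Rle_dec x (s - d/2)); auto.
      exfalso. assert (x <= s) by (apply Hs1; auto). destruct Hx as [Hx1 Hx2].
      apply (H x). unfold in01; lra. apply Rabs_def1; lra. auto. }
    specialize (Hs2 _ Hub). lra.
  - intros t Ht E'. assert (t <= s) by (apply Hs1; split; auto; lra). lra.
Qed.

Lemma first_hit g a b c : cont01 g -> 0 <= a -> a <= b -> b <= 1 -> g b = c ->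
  exists s, a <= s <= b /\ g s = c /\ forall t, a <= t < s -> g t <> c.
Proof.
  intros Hg Ha Hab Hb Hc.
  set (E := fun t => a <= t <= b /\ forall t', a <= t' < t -> g t' <> c).
  assert (Hbd : bound E). { exists b; intros x [Hx _]; lra. }
  assert (Hne : exists x, E x). { exists a; split; [lra|]. intros; lra. }
  destruct (completeness E Hbd Hne) as [s [Hs1 Hs2]].
  assert (Has : a <= s). { apply Hs1; split; [lra|]. intros; lra. }
  assert (Hsb : s <= b). { apply Hs2; intros x [Hx _]; lra. }
  assert (Hbefore : forall t, a <= t < s -> g t <> c).
  { intros t Ht. destruct (classic (exists x, E x /\ t < x)) as [[x [[_ Hx] Htx]]|Hn].
    apply Hx; lra.
    exfalso. assert (Hub : is_upper_bound E t).
    { intros x Hx. destruct (Rle_dec x t); auto. exfalso; apply Hn; exists x; split; auto; lra. }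
    specialize (Hs2 _ Hub); lra. }
  exists s; split; [lra|split; auto].
  destruct (Req_dec (g s) c) as [|Hne']; auto. exfalso.
  destruct (Req_dec s b) as [->|Hsb']; [contradiction|].
  destruct (cont_neq g s c Hg ltac:(unfold in01; lra) Hne') as [d [Hd H]].
  assert (HE : E (Rmin (s + d/2) b)).
  { split. pose proof (Rmin_r (s + d/2) b). unfold Rmin; destruct (Rle_dec (s+d/2) b); lra.
    intros t' Ht'. destruct (Rlt_le_dec t' s). apply Hbefore; lra.
    pose proof (Rmin_l (s + d/2) b). pose proof (Rmin_r (s + d/2) b). apply H. unfold in01; lra. apply Rabs_def1; lra. }
  specialize (Hs1 _ HE). unfold Rmin in Hs1; destruct (Rle_dec (s+d/2) b); lra.
Qed.

Lemma unif01 g : cont01 g -> forall e, 0 < e -> exists d, 0 < d /\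
  forall x y, in01 x -> in01 y -> Rabs (x - y) < d -> Rabs (g x - g y) < e.
Proof.
  intros Hg e He.
  assert (H := Heine (fun x => g (clamp x)) (fun c => 0 <= c <= 1) (compact_P3 0 1)
    (fun x _ => cont01_ext g Hg x)).
  destruct (H (mkposreal e He)) as [[d Hd] Hu]. simpl in Hu.
  exists d; split; auto. intros x y Hx Hy Hxy.
  specialize (Hu x y Hx Hy Hxy). rewrite !clamp_id in Hu; auto.
Qed.

Definition Levels (c : nat -> R) (r : nat) : Prop :=
  (1 <= r)%nat /\ c 0%nat = 0 /\ c r = 1 /\ forall l, (l < r)%nat -> c l < c (S l).

Lemma lev_lt c r l1 l2 : Levels c r -> (l1 < l2)%nat -> (l2 <= r)%nat -> c l1 < c l2.
Proof.
  intros [_ [_ [_ H]]] H12 H2. induction l2 as [|l2 IH]; [lia|].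
  destruct (Nat.eq_dec l1 l2) as [->|]. apply H; lia.
  apply Rlt_trans with (c l2). apply IH; lia. apply H; lia.
Qed.

Lemma lev_le c r l1 l2 : Levels c r -> (l1 <= l2)%nat -> (l2 <= r)%nat -> c l1 <= c l2.
Proof. intros HL H1 H2. destruct (Nat.eq_dec l1 l2) as [->|]; [lra|]. left; apply (lev_lt c r); auto; lia. Qed.

Lemma lev_inj c r l1 l2 : Levels c r -> (l1 <= r)%nat -> (l2 <= r)%nat -> c l1 = c l2 -> l1 = l2.
Proof. intros HL H1 H2 E. destruct (Nat.lt_trichotomy l1 l2) as [H|[H|H]]; auto.
  pose proof (lev_lt c r l1 l2 HL H H2); lra. pose proof (lev_lt c r l2 l1 HL H H1); lra. Qed.

Lemma lev_range c r l : Levels c r -> (l <= r)%nat -> 0 <= c l <= 1.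
Proof. intros HL Hl. pose proof HL as [_ [H0 [H1 _]]]. split.
  rewrite <- H0; apply (lev_le c r); auto; lia. rewrite <- H1; apply (lev_le c r); auto. Qed.

Lemma lev_gap c r : Levels c r -> exists d, 0 < d /\ forall l, (l < r)%nat -> d <= c (S l) - c l.
Proof.
  intros [_ [_ [_ H]]]. clear -H. induction r as [|r IH].
  - exists 1; split; [lra|]; intros; lia.
  - destruct IH as [d [Hd Hd2]]. intros; apply H; lia.
    exists (Rmin d (c (S r) - c r)); split.
    apply Rmin_pos; auto. specialize (H r ltac:(lia)); lra.
    intros l Hl. destruct (Nat.eq_dec l r) as [->|]. apply Rmin_r.
    eapply Rle_trans; [apply Rmin_l|]. apply Hd2; lia.
Qed.

Definition between (x y z : R) := Rmin x y <= z <= Rmax x y.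


Lemma between_l x y z : x <= y -> x <= z <= y -> between x y z.
Proof. unfold between, Rmin, Rmax; destruct (Rle_dec x y); lra. Qed.
Lemma between_r x y z : y <= x -> y <= z <= x -> between x y z.
Proof. unfold between, Rmin, Rmax; destruct (Rle_dec x y); lra. Qed.

Lemma gstep g c r t0 l : cont01 g -> maps01 g -> g 1 = 1 -> Levels c r -> in01 t0 -> g t0 = c l -> (l < r)%nat ->
  exists t1 l' s, t0 <= s <= t1 /\ t1 <= 1 /\ (l' = S l \/ l = S l') /\ g t1 = c l' /\ g s = c l /\
   (forall t, t0 <= t <= s -> c (l - 1)%nat <= g t <= c (S l)) /\
   (forall t, s <= t <= t1 -> between (c l) (c l') (g t)).
Proof.
  intros Hg Hm H1 HL Ht0 Hgt0 Hlr.
  pose proof HL as [Hr [Hc0 [Hcr Hinc]]].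
  assert (Hup : c l < c (S l)) by (apply Hinc; auto).
  assert (HS1 : c (S l) <= 1) by (rewrite <- Hcr; apply (lev_le c r); auto; lia).
  destruct (ivt01 g t0 1 (c (S l)) Hg ltac:(unfold in01 in *; lra) ltac:(unfold in01 in *; lra) ltac:(lra) ltac:(left; lra)) as [b [Hb Hgb]].
  destruct (first_hit g t0 b (c (S l)) Hg ltac:(unfold in01 in *; lra) ltac:(lra) ltac:(lra) Hgb) as [tp [Htp [Hgtp Hntp]]].
  assert (Hmain : exists t1 l', t0 < t1 <= tp /\ (l' = S l \/ l = S l') /\ g t1 = c l' /\
     (forall t, t0 <= t < t1 -> g t <> c (S l)) /\
     ((0 < l)%nat -> forall t, t0 <= t < t1 -> g t <> c (l - 1)%nat)).
  { destruct (classic ((0 < l)%nat /\ exists z, t0 <= z <= tp /\ g z = c (l - 1)%nat)) as [[Hl0 [z [Hz Hgz]]]|Hno].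
    - destruct (first_hit g t0 z (c (l-1)%nat) Hg ltac:(unfold in01 in *; lra) ltac:(lra) ltac:(lra) Hgz) as [tm [Htm [Hgtm Hntm]]].
      assert (Hlow : c (l - 1)%nat < c l) by (apply (lev_lt c r); [exact HL|lia|lia]).
      exists tm, (l - 1)%nat. split; [|split; [right; lia|split; [auto|split]]].
      + split; [|lra]. destruct (Req_dec tm t0) as [E|]; [|lra]. subst tm. lra.
      + intros t Ht. apply Hntp; lra.
      + intros _ t Ht. apply Hntm; lra.
    - exists tp, (S l). split; [|split; [left; auto|split; [auto|split]]].
      + split; [|lra]. destruct (Req_dec tp t0) as [E|]; [|lra]. subst tp. lra.
      + auto.
      + intros Hl0 t Ht E. apply Hno; split; auto. exists t; split; auto; lra. }
  destruct Hmain as [t1 [l' [Ht1 [Hl' [Hgt1 [NoUp NoDn]]]]]].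
  assert (Hl'r : (l' <= r)%nat) by lia.
  assert (Hopen : forall t, t0 <= t < t1 -> c (l - 1)%nat <= g t <= c (S l)).
  { intros t Ht. split.
    - destruct (Nat.eq_dec l 0) as [->|Hl0].
      + simpl. rewrite Hc0. apply (Hm t); unfold in01 in *; lra.
      + destruct (Rle_dec (c (l-1)%nat) (g t)) as [|Hlt]; auto. exfalso.
        assert (c (l - 1)%nat < c l) by (apply (lev_lt c r); [exact HL|lia|lia]).
        destruct (ivt01 g t0 t (c (l-1)%nat) Hg ltac:(unfold in01 in *; lra) ltac:(lra) ltac:(unfold in01 in *; lra) ltac:(right; lra)) as [w [Hw Hgw]].
        apply (NoDn ltac:(lia) w); auto; lra.
    - destruct (Rle_dec (g t) (c (S l))) as [|Hlt]; auto. exfalso.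
      destruct (ivt01 g t0 t (c (S l)) Hg ltac:(unfold in01 in *; lra) ltac:(lra) ltac:(unfold in01 in *; lra) ltac:(left; lra)) as [w [Hw Hgw]].
      apply (NoUp w); auto; lra. }
  destruct (last_hit g t0 t1 (c l) Hg ltac:(unfold in01 in *; lra) ltac:(lra) ltac:(lra) Hgt0) as [s [Hs [Hgs Hns]]].
  assert (Hneq : c l' <> c l).
  { intro E. apply (lev_inj c r) in E; auto; lia. }
  assert (Hst : s < t1). { destruct (Req_dec s t1) as [E|]; [|lra]. subst s. congruence. }
  exists t1, l', s. split; [lra|split; [lra|split; [auto|split; [auto|split; [auto|split]]]]].
  - intros t Ht. apply Hopen; lra.
  - intros t Ht.
    destruct (Req_dec t t1) as [->|Htt1]. rewrite Hgt1. destruct Hl' as [ -> | -> ].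
    apply between_l; lra. assert (c l' < c (S l')) by (apply Hinc; lia). apply between_r; lra.
    assert (Hin := Hopen t ltac:(lra)).
    destruct Hl' as [ -> | -> ].
    + apply between_l; [lra|]. split; [|lra].
      destruct (Rle_dec (c l) (g t)) as [|Hlt]; auto. exfalso.
      destruct (ivt01 g t t1 (c l) Hg ltac:(unfold in01 in *; lra) ltac:(lra) ltac:(lra) ltac:(left; lra)) as [w [Hw Hgw]].
      destruct (Req_dec w s) as [->|Hws].
      * assert (t = s) by lra. subst t. lra.
      * apply (Hns w); auto. destruct (Rle_dec w s); [|lra]. assert (w = s) by lra. contradiction.
    + assert (c l' < c (S l')) by (apply Hinc; lia).
      replace (S l' - 1)%nat with l' in Hin by lia.
      apply between_r; [lra|]. split; [lra|].
      destruct (Rle_dec (g t) (c (S l'))) as [|Hlt]; auto. exfalso.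
      destruct (ivt01 g t t1 (c (S l')) Hg ltac:(unfold in01 in *; lra) ltac:(lra) ltac:(lra) ltac:(right; lra)) as [w [Hw Hgw]].
      destruct (Req_dec w s) as [->|Hws].
      * assert (t = s) by lra. subst t. lra.
      * apply (Hns w); auto. destruct (Rle_dec w s); [|lra]. assert (w = s) by lra. contradiction.
Qed.

Definition GWf (g : R -> R) (c : nat -> R) (r : nat) (t0 : R) (l N : nat) (ell : nat -> nat) (tau sig : nat -> R) :=
  ell 0%nat = l /\ ell N = r /\ (forall i, (i < N)%nat -> ell (S i) = S (ell i) \/ ell i = S (ell (S i))) /\
  (forall i, (i <= N)%nat -> (ell i <= r)%nat) /\
  tau 0%nat = t0 /\ (forall i, (i <= N)%nat -> in01 (tau i) /\ g (tau i) = c (ell i)) /\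
  (forall i, (i < N)%nat -> (ell i < r)%nat /\ tau i <= sig i <= tau (S i) /\ g (sig i) = c (ell i) /\
     (forall t, tau i <= t <= sig i -> c (ell i - 1)%nat <= g t <= c (S (ell i))) /\
     (forall t, sig i <= t <= tau (S i) -> between (c (ell i)) (c (ell (S i))) (g t))).

Lemma gwalk_ind g c r d eta : cont01 g -> maps01 g -> g 1 = 1 -> Levels c r ->
  0 < d -> (forall l, (l < r)%nat -> d <= c (S l) - c l) -> 0 < eta ->
  (forall x y, in01 x -> in01 y -> Rabs (x - y) < eta -> Rabs (g x - g y) < d) ->
  forall M t0 l, in01 t0 -> g t0 = c l -> (l <= r)%nat -> 1 - t0 < INR M * eta ->
  exists N ell tau sig, GWf g c r t0 l N ell tau sig.
Proof.
  intros Hg Hm H1 HL Hd Hgap Heta Hu M. induction M as [|M IH]; intros t0 l Ht0 Hgt0 Hlr HM.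
  - simpl in HM. unfold in01 in Ht0; lra.
  - destruct (Nat.eq_dec l r) as [->|Hne].
    + exists 0%nat, (fun _ => r), (fun _ => t0), (fun _ => t0).
      unfold GWf. split; [auto|split; [auto|split; [intros; lia|split; [intros; lia|split; [auto|split]]]]].
      intros; split; auto. intros; lia.
    + destruct (gstep g c r t0 l Hg Hm H1 HL Ht0 Hgt0 ltac:(lia)) as [t1 [l' [s [Hs [Ht1 [Hl' [Hgt1 [Hgs [Hlo Hband]]]]]]]]].
      assert (Hl'r : (l' <= r)%nat) by lia.
      assert (Hstep : t0 + eta <= t1).
      { destruct (Rle_dec (t0 + eta) t1) as [|Hlt]; auto. exfalso.
        assert (Habs : Rabs (g t1 - g t0) < d).
        { apply Hu; unfold in01 in *; try lra. apply Rabs_def1; lra. }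
        rewrite Hgt1, Hgt0 in Habs. apply Rabs_def2 in Habs.
        destruct Hl' as [ -> | -> ]. specialize (Hgap l ltac:(lia)); lra. specialize (Hgap l' ltac:(lia)); lra. }
      rewrite S_INR in HM.
      destruct (IH t1 l' ltac:(unfold in01 in *; lra) Hgt1 Hl'r ltac:(lra)) as [N [ell [tau [sig HW]]]].
      destruct HW as [E0 [EN [Eadj [Er [T0 [Tin Tst]]]]]].
      exists (S N), (fun i => match i with 0%nat => l | S j => ell j end),
        (fun i => match i with 0%nat => t0 | S j => tau j end),
        (fun i => match i with 0%nat => s | S j => sig j end).
      unfold GWf. split; [auto|split; [auto|split; [|split; [|split; [auto|split]]]]].
      * intros [|i] Hi. rewrite E0; lia. apply Eadj; lia.
      * intros [|i] Hi. lia. apply Er; lia.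
      * intros [|i] Hi. split; auto. apply Tin; lia.
      * intros [|i] Hi.
        -- rewrite E0, T0. split; [lia|split; [lra|split; [auto|split; auto]]].
        -- apply Tst; lia.
Qed.

Lemma gwalk g c r : cont01 g -> maps01 g -> g 0 = 0 -> g 1 = 1 -> Levels c r ->
  exists N ell tau sig, GWf g c r 0 0 N ell tau sig.
Proof.
  intros Hg Hm H0 H1 HL.
  destruct (lev_gap c r HL) as [d [Hd Hgap]].
  destruct (unif01 g Hg d Hd) as [eta [Heta Hu]].
  destruct (INR_archimed eta 1 Heta) as [M HM].
  apply (gwalk_ind g c r d eta Hg Hm H1 HL Hd Hgap Heta Hu M); auto.
  unfold in01; lra. destruct HL as [_ [-> _]]; auto. lia. lra.
Qed.

Lemma lev_insert c r x : Levels c r -> 0 <= x <= 1 ->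
  exists c' r', Levels c' r' /\ (forall l, (l <= r)%nat -> exists l', (l' <= r')%nat /\ c' l' = c l) /\
    exists l', (l' <= r')%nat /\ c' l' = x.
Proof.
  intros HL Hx. pose proof HL as [Hr [Hc0 [Hcr Hinc]]].
  destruct (classic (exists l, (l <= r)%nat /\ c l = x)) as [Hin|Hno].
  - exists c, r; split; auto; split; auto. intros l Hl; exists l; auto.
  - destruct (min_ex (fun q => (q <= r)%nat /\ x < c q)) as [q [[Hqr Hxq] Hmin]].
    { exists r; split; auto. destruct (Req_dec x 1) as [E|E]. exfalso; apply Hno; exists r; split; auto; lra. lra. }
    assert (Hq0 : (q <> 0)%nat). { intro; subst q. lra. }
    set (L := (q - 1)%nat).
    assert (HcL : c L < x).
    { assert (c L <= x). { destruct (Rle_dec (c L) x); auto. exfalso. apply (Hmin L). unfold L; lia. split; [unfold L; lia|lra]. }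
      destruct (Req_dec (c L) x); [|lra]. exfalso; apply Hno; exists L; split; auto. unfold L; lia. }
    assert (HqL : q = S L) by (unfold L; lia).
    rewrite HqL in Hxq, Hqr.
    set (c' := fun q => if (q <=? L)%nat then c q else if (q =? S L)%nat then x else c (q - 1)%nat).
    exists c', (S r). split; [|split].
    + split; [lia|split; [|split]].
      * unfold c'; simpl. auto.
      * unfold c'. destruct (Nat.leb_spec (S r) L); [lia|]. destruct (Nat.eqb_spec (S r) (S L)); [lia|].
        replace (S r - 1)%nat with r by lia. auto.
      * intros l Hl. unfold c'.
        destruct (Nat.leb_spec l L); destruct (Nat.leb_spec (S l) L).
        -- apply Hinc; lia.
        -- destruct (Nat.eqb_spec (S l) (S L)); [|lia]. replace l with L by lia. auto.
        -- lia.
        -- destruct (Nat.eqb_spec l (S L)); destruct (Nat.eqb_spec (S l) (S L)); try lia.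
           ++ subst l. replace (S (S L) - 1)%nat with (S L) by lia. auto.
           ++ replace (S l - 1)%nat with (S (l - 1)) by lia. apply Hinc; lia.
    + intros l Hl. destruct (Nat.leb_spec l L).
      * exists l; split; [lia|]. unfold c'. destruct (Nat.leb_spec l L); [auto|lia].
      * exists (S l); split; [lia|]. unfold c'. destruct (Nat.leb_spec (S l) L); [lia|].
        destruct (Nat.eqb_spec (S l) (S L)); [lia|]. f_equal; lia.
    + exists (S L); split; [lia|]. unfold c'. destruct (Nat.leb_spec (S L) L); [lia|].
      rewrite Nat.eqb_refl; auto.
Qed.

Lemma levels_exist (v : nat -> R) (k : nat) : (forall j, (j <= k)%nat -> 0 <= v j <= 1) ->
  exists c r, Levels c r /\ forall j, (j <= k)%nat -> exists l, (l <= r)%nat /\ c l = v j.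
Proof.
  intros Hv.
  assert (H : forall n, (n <= S k)%nat -> exists c r, Levels c r /\ forall j, (j < n)%nat -> exists l, (l <= r)%nat /\ c l = v j).
  { induction n; intros Hn.
    - exists (fun l => if (l =? 0)%nat then 0 else 1), 1%nat. split; [|intros; lia].
      split; [lia|split; [auto|split; [auto|]]]. intros l Hl. replace l with 0%nat by lia. simpl; lra.
    - destruct (IHn ltac:(lia)) as [c [r [HL Hcov]]].
      destruct (lev_insert c r (v n) HL (Hv n ltac:(lia))) as [c' [r' [HL' [Hmap Hx]]]].
      exists c', r'; split; auto. intros j Hj.
      destruct (Nat.eq_dec j n) as [->|]; auto.
      destruct (Hcov j ltac:(lia)) as [l [Hl Hcl]]. destruct (Hmap l Hl) as [l' [Hl' E]].
      exists l'; split; auto; congruence. }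
  destruct (H (S k) ltac:(lia)) as [c [r [HL Hc]]]. exists c, r; split; auto.
  intros j Hj; apply Hc; lia.
Qed.

Definition FWp (f : R -> R) (c : nat -> R) (r K : nat) (lam : nat -> nat) (p : nat -> R) (A B : R) :=
  (1 <= K)%nat /\ (forall m, (m < K)%nat -> lam (S m) = S (lam m) \/ lam m = S (lam (S m))) /\
  (forall m, (m <= K)%nat -> (lam m <= r)%nat) /\ p 0%nat = A /\ p K = B /\
  (forall m, (m <= K)%nat -> A <= p m <= B /\ f (p m) = c (lam m)) /\
  (forall m, (m < K)%nat -> p m < p (S m) /\
      (strict_incr_on f (p m) (p (S m)) \/ strict_decr_on f (p m) (p (S m)))).

Lemma incr_sub f A B a b : strict_incr_on f A B -> A <= a -> b <= B -> strict_incr_on f a b.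
Proof. intros H Ha Hb x y ? ? ?; apply H; lra. Qed.
Lemma decr_sub f A B a b : strict_decr_on f A B -> A <= a -> b <= B -> strict_decr_on f a b.
Proof. intros H Ha Hb x y ? ? ?; apply H; lra. Qed.

Lemma piece_incr f c r A B al be : cont01 f -> 0 <= A -> A < B -> B <= 1 -> strict_incr_on f A B ->
  Levels c r -> (al <= r)%nat -> (be <= r)%nat -> f A = c al -> f B = c be ->
  exists K lam p, FWp f c r K lam p A B.
Proof.
  intros Hf HA HAB HB Hm HL Hal Hbe EA EB.
  assert (Hlt : (al < be)%nat).
  { destruct (Nat.lt_ge_cases al be) as [|Hge]; auto. exfalso.
    assert (f A < f B) by (apply Hm; lra). pose proof (lev_le c r be al HL Hge Hal). lra. }
  assert (Hex : forall q, exists y, (q <= be - al)%nat -> A <= y <= B /\ f y = c (al + q)%nat).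
  { intros q. destruct (Compare_dec.le_lt_dec q (be - al)) as [Hq|Hq].
    - destruct (ivt01 f A B (c (al + q)%nat) Hf HA (Rlt_le _ _ HAB) HB) as [y Hy].
      left. rewrite EA, EB. split; apply (lev_le c r); auto; lia.
      exists y; auto.
    - exists A; intros; lia. }
  apply choice in Hex. destruct Hex as [p Hp].
  exists (be - al)%nat, (fun q => (al + q)%nat), p.
  assert (P0 : p 0%nat = A).
  { destruct (Hp 0%nat ltac:(lia)) as [H1 H2]. apply (incr_inj f A B); [auto|auto|lra|].
    rewrite H2, EA. f_equal; lia. }
  assert (PK : p (be - al)%nat = B).
  { destruct (Hp (be - al)%nat ltac:(lia)) as [H1 H2]. apply (incr_inj f A B); [auto|auto|lra|].
    rewrite H2, EB. f_equal; lia. }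
  split; [lia|split; [intros; lia|split; [intros; lia|split; [auto|split; [auto|split]]]]].
  - intros m Hm'. apply Hp; auto.
  - intros m Hm'. destruct (Hp m ltac:(lia)) as [H1 H2]. destruct (Hp (S m) ltac:(lia)) as [H3 H4].
    assert (p m < p (S m)).
    { apply (incr_rev f A B); auto. rewrite H2, H4. apply (lev_lt c r); auto; lia. }
    split; auto. left. apply (incr_sub f A B); [exact Hm|lra|lra].
Qed.

Lemma piece_decr f c r A B al be : cont01 f -> 0 <= A -> A < B -> B <= 1 -> strict_decr_on f A B ->
  Levels c r -> (al <= r)%nat -> (be <= r)%nat -> f A = c al -> f B = c be ->
  exists K lam p, FWp f c r K lam p A B.
Proof.
  intros Hf HA HAB HB Hm HL Hal Hbe EA EB.
  assert (Hlt : (be < al)%nat).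
  { destruct (Nat.lt_ge_cases be al) as [|Hge]; auto. exfalso.
    assert (f B < f A) by (apply Hm; lra). pose proof (lev_le c r al be HL Hge Hbe). lra. }
  assert (Hex : forall q, exists y, (q <= al - be)%nat -> A <= y <= B /\ f y = c (al - q)%nat).
  { intros q. destruct (Compare_dec.le_lt_dec q (al - be)) as [Hq|Hq].
    - destruct (ivt01 f A B (c (al - q)%nat) Hf HA (Rlt_le _ _ HAB) HB) as [y Hy].
      right. rewrite EA, EB. split; apply (lev_le c r); auto; lia.
      exists y; auto.
    - exists A; intros; lia. }
  apply choice in Hex. destruct Hex as [p Hp].
  exists (al - be)%nat, (fun q => (al - q)%nat), p.
  assert (P0 : p 0%nat = A).
  { destruct (Hp 0%nat ltac:(lia)) as [H1 H2]. apply (decr_inj f A B); [auto|auto|lra|].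
    rewrite H2, EA. f_equal; lia. }
  assert (PK : p (al - be)%nat = B).
  { destruct (Hp (al - be)%nat ltac:(lia)) as [H1 H2]. apply (decr_inj f A B); [auto|auto|lra|].
    rewrite H2, EB. f_equal; lia. }
  split; [lia|split; [intros; lia|split; [intros; lia|split; [auto|split; [auto|split]]]]].
  - intros m Hm'. apply Hp; auto.
  - intros m Hm'. destruct (Hp m ltac:(lia)) as [H1 H2]. destruct (Hp (S m) ltac:(lia)) as [H3 H4].
    assert (p m < p (S m)).
    { apply (incr_rev (fun x => - f x) A B); auto. apply decr_incr; auto. rewrite H2, H4.
      assert (c (al - S m)%nat < c (al - m)%nat) by (apply (lev_lt c r); auto; lia). lra. }
    split; auto. right. apply (decr_sub f A B); [exact Hm|lra|lra].
Qed.

Lemma fw_append f c r K1 lam1 p1 K2 lam2 p2 A B C :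
  FWp f c r K1 lam1 p1 A B -> FWp f c r K2 lam2 p2 B C -> lam1 K1 = lam2 0%nat ->
  exists K lam p, FWp f c r K lam p A C.
Proof.
  intros [H1 [Ha1 [Hr1 [P01 [PK1 [Hin1 Hst1]]]]]] [H2 [Ha2 [Hr2 [P02 [PK2 [Hin2 Hst2]]]]]] E.
  set (lam := fun m => if (m <=? K1)%nat then lam1 m else lam2 (m - K1)%nat).
  set (p := fun m => if (m <=? K1)%nat then p1 m else p2 (m - K1)%nat).
  assert (L1 : forall m, (m <= K1)%nat -> lam m = lam1 m /\ p m = p1 m).
  { intros m Hm; unfold lam, p. destruct (Nat.leb_spec m K1); [auto|lia]. }
  assert (L2 : forall m, (K1 <= m)%nat -> lam m = lam2 (m - K1)%nat /\ p m = p2 (m - K1)%nat).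
  { intros m Hm; unfold lam, p. destruct (Nat.leb_spec m K1).
    replace m with K1 by lia. rewrite Nat.sub_diag, E, P02, PK1; auto. auto. }
  assert (HBC : B <= C) by (destruct (Hin2 0%nat ltac:(lia)); lra).
  assert (HAB : A <= B) by (destruct (Hin1 0%nat ltac:(lia)); lra).
  exists (K1 + K2)%nat, lam, p.
  split; [lia|split; [|split; [|split; [|split; [|split]]]]].
  - intros m Hm. destruct (Nat.lt_ge_cases m K1).
    + rewrite (proj1 (L1 m ltac:(lia))), (proj1 (L1 (S m) ltac:(lia))). apply Ha1; auto.
    + rewrite (proj1 (L2 m ltac:(lia))), (proj1 (L2 (S m) ltac:(lia))).
      replace (S m - K1)%nat with (S (m - K1)) by lia. apply Ha2; lia.
  - intros m Hm. destruct (Nat.le_ge_cases m K1).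
    + rewrite (proj1 (L1 m H)); auto.
    + rewrite (proj1 (L2 m H)); apply Hr2; lia.
  - rewrite (proj2 (L1 0%nat ltac:(lia))); auto.
  - rewrite (proj2 (L2 (K1 + K2)%nat ltac:(lia))). replace (K1 + K2 - K1)%nat with K2 by lia; auto.
  - intros m Hm. destruct (Nat.le_ge_cases m K1).
    + rewrite (proj1 (L1 m H)), (proj2 (L1 m H)). destruct (Hin1 m H); split; auto; lra.
    + rewrite (proj1 (L2 m H)), (proj2 (L2 m H)). destruct (Hin2 (m - K1)%nat ltac:(lia)); split; auto; lra.
  - intros m Hm. destruct (Nat.lt_ge_cases m K1).
    + rewrite (proj2 (L1 m ltac:(lia))), (proj2 (L1 (S m) ltac:(lia))). apply Hst1; auto.
    + rewrite (proj2 (L2 m ltac:(lia))), (proj2 (L2 (S m) ltac:(lia))).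
      replace (S m - K1)%nat with (S (m - K1)) by lia. apply Hst2; lia.
Qed.

Definition FW (f : R -> R) (c : nat -> R) (r K : nat) (lam : nat -> nat) (p : nat -> R) :=
  FWp f c r K lam p 0 1 /\ DWalk K r lam.

Lemma fwalk f : cont01 f -> maps01 f -> piecewise_monotone f -> f 0 = 0 -> f 1 = 1 ->
  forall (g : R -> R), cont01 g -> maps01 g -> g 0 = 0 -> g 1 = 1 ->
  exists c r K lam p N ell tau sig, Levels c r /\ FW f c r K lam p /\ GWf g c r 0 0 N ell tau sig.
Proof.
  intros Hf Hm [k [a [Hk [Ha0 [Hak [Hainc Hmono]]]]]] F0 F1 g Hg Hgm G0 G1.
  assert (Hain : forall j, (j <= k)%nat -> 0 <= a j <= 1).
  { assert (forall j, (j <= k)%nat -> 0 <= a j). { induction j; intros; [lra|]. specialize (Hainc j ltac:(lia)); specialize (IHj ltac:(lia)); lra. }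
    assert (forall d, (d <= k)%nat -> a (k - d)%nat <= 1).
    { induction d; intros Hd. rewrite Nat.sub_0_r; lra. specialize (Hainc (k - S d)%nat ltac:(lia)).
      replace (S (k - S d)) with (k - d)%nat in Hainc by lia. specialize (IHd ltac:(lia)); lra. }
    intros j Hj; split; auto. replace j with (k - (k - j))%nat by lia. apply H0; lia. }
  destruct (levels_exist (fun j => f (a j)) k) as [c [r [HL Hcov]]].
  { intros j Hj. apply Hm. apply Hain; auto. }
  assert (Hpiece : forall j, (j < k)%nat -> exists K lam p, FWp f c r K lam p (a j) (a (S j))).
  { intros j Hj. destruct (Hcov j ltac:(lia)) as [al [Hal Eal]]. destruct (Hcov (S j) ltac:(lia)) as [be [Hbe Ebe]].
    pose proof (Hain j ltac:(lia)). pose proof (Hain (S j) ltac:(lia)). pose proof (Hainc j Hj).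
    destruct (Hmono j Hj) as [Hi|Hd].
    apply (piece_incr f c r (a j) (a (S j)) al be); auto; lra.
    apply (piece_decr f c r (a j) (a (S j)) al be); auto; lra. }
  assert (Hpre : forall J, (1 <= J <= k)%nat -> exists K lam p, FWp f c r K lam p 0 (a J)).
  { intros J. induction J as [|J IH]; intros HJ; [lia|].
    destruct (Nat.eq_dec J 0) as [->|HJ0].
    - rewrite <- Ha0. apply Hpiece; lia.
    - destruct (IH ltac:(lia)) as [K1 [lam1 [p1 W1]]]. destruct (Hpiece J ltac:(lia)) as [K2 [lam2 [p2 W2]]].
      apply (fw_append f c r K1 lam1 p1 K2 lam2 p2 0 (a J) (a (S J))); auto.
      pose proof W1 as [_ [_ [Hr1 [_ [PK1 [Hin1 _]]]]]]. pose proof W2 as [_ [_ [Hr2 [P02 [_ [Hin2 _]]]]]].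
      apply (lev_inj c r); auto. apply Hr2; lia.
      destruct (Hin1 K1 ltac:(lia)) as [_ E1]. destruct (Hin2 0%nat ltac:(lia)) as [_ E2].
      rewrite <- E1, <- E2, PK1, P02. auto. }
  destruct (Hpre k ltac:(lia)) as [K [lam [p W]]]. rewrite Hak in W.
  destruct (gwalk g c r Hg Hgm G0 G1 HL) as [N [ell [tau [sig HGW]]]].
  exists c, r, K, lam, p, N, ell, tau, sig. split; auto. split; auto. split; auto.
  pose proof W as [HK1 [Hadj [Hr [P0 [PK [Hin _]]]]]].
  pose proof HL as [_ [Hc0 [Hcr _]]].
  split; [|split; [|split; auto]].
  - apply (lev_inj c r); [exact HL|apply Hr; lia|lia|]. destruct (Hin 0%nat ltac:(lia)) as [_ E]. rewrite <- E, P0, Hc0; auto.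
  - apply (lev_inj c r); [exact HL|apply Hr; lia|lia|]. destruct (Hin K ltac:(lia)) as [_ E]. rewrite <- E, PK, Hcr; auto.
Qed.

Definition Reach' (f g : R -> R) (P V : R) : Prop :=
  exists u v, cont01 u /\ cont01 v /\ maps01 u /\ maps01 v /\ u 0 = 0 /\ v 0 = 0 /\
    u 1 = P /\ v 1 = V /\ forall t, in01 t -> f (u t) = g (v t).

Definition Seg (f g : R -> R) (P V P' V' : R) : Prop :=
  exists u v, cont01 u /\ cont01 v /\ maps01 u /\ maps01 v /\ u 0 = P /\ v 0 = V /\
    u 1 = P' /\ v 1 = V' /\ forall t, in01 t -> f (u t) = g (v t).

Lemma extend f g P V P' V' : Reach' f g P V -> Seg f g P V P' V' -> Reach' f g P' V'.
Proof.
  intros [u1 [v1 [Hu1 [Hv1 [Mu1 [Mv1 [U0 [V0 [U1 [V1 R1]]]]]]]]]] [u2 [v2 [Hu2 [Hv2 [Mu2 [Mv2 [U20 [V20 [U21 [V21 R2]]]]]]]]]].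
  exists (cat u1 u2), (cat v1 v2). split; [apply cat_cont; [auto|auto|congruence]|].
  split; [apply cat_cont; [auto|auto|congruence]|]. split; [apply cat_maps; auto|]. split; [apply cat_maps; auto|].
  rewrite !cat0, !cat1. split; auto; split; auto; split; auto; split; auto.
  apply cat_rel; auto.
Qed.

Lemma between_sym x y z : between x y z -> between y x z.
Proof. unfold between, Rmin, Rmax. destruct (Rle_dec x y), (Rle_dec y x); lra. Qed.

Lemma seg f g a b x y P P' : cont01 f -> cont01 g -> 0 <= a -> a < b -> b <= 1 ->
  (strict_incr_on f a b \/ strict_decr_on f a b) -> in01 x -> in01 y ->
  (forall s, Rmin x y <= s <= Rmax x y -> between (f a) (f b) (g s)) ->
  a <= P <= b -> f P = g x -> a <= P' <= b -> f P' = g y -> Seg f g P x P' y.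
Proof.
  intros Hf Hg Ha Hab Hb Hm Hx Hy Hr HP EP HP' EP'.
  destruct (track f a b (fun t => g (lin x y t)) Hf Ha Hab Hb Hm) as [u [Hu Hu2]].
  apply cont01_comp; auto. apply cont01_lin. apply maps01_lin; auto.
  intros t Ht. apply Hr. apply lin_between; auto.
  exists u, (lin x y). split; auto. split; [apply cont01_lin|]. split.
  intros t Ht. destruct (Hu2 t Ht). unfold in01; lra.
  split; [apply maps01_lin; auto|].
  assert (I0 : in01 0) by (unfold in01; lra). assert (I1 : in01 1) by (unfold in01; lra).
  split. destruct (Hu2 0 I0) as [A B]. rewrite lin0 in B. apply (mono_inj f a b); auto; congruence.
  split. apply lin0.
  split. destruct (Hu2 1 I1) as [A B]. rewrite lin1 in B. apply (mono_inj f a b); auto; congruence.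
  split. apply lin1.
  intros t Ht. destruct (Hu2 t Ht); auto.
Qed.

Lemma incr_union f x y z : strict_incr_on f x y -> strict_incr_on f y z -> strict_incr_on f x z.
Proof.
  intros H1 H2 s t Hs Hst Ht.
  destruct (Rle_dec t y). apply H1; lra.
  destruct (Rle_dec y s). apply H2; lra.
  apply Rlt_trans with (f y). apply H1; lra. apply H2; lra.
Qed.

Lemma decr_union f x y z : strict_decr_on f x y -> strict_decr_on f y z -> strict_decr_on f x z.
Proof.
  intros H1 H2 s t Hs Hst Ht.
  destruct (Rle_dec t y). apply H1; lra.
  destruct (Rle_dec y s). apply H2; lra.
  apply Rlt_trans with (f y). apply H2; lra. apply H1; lra.
Qed.

Lemma mono_dir_incr f x y : x < y -> (strict_incr_on f x y \/ strict_decr_on f x y) -> f x < f y -> strict_incr_on f x y.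
Proof. intros Hxy [H|H] E; auto. specialize (H x y ltac:(lra) Hxy ltac:(lra)). lra. Qed.
Lemma mono_dir_decr f x y : x < y -> (strict_incr_on f x y \/ strict_decr_on f x y) -> f y < f x -> strict_decr_on f x y.
Proof. intros Hxy [H|H] E; auto. specialize (H x y ltac:(lra) Hxy ltac:(lra)). lra. Qed.

Definition Ctx f g c r K lam p N ell tau sig :=
  cont01 f /\ maps01 f /\ cont01 g /\ maps01 g /\ Levels c r /\ FW f c r K lam p /\ GWf g c r 0 0 N ell tau sig.

Lemma seg_strand f g c r K lam p N ell tau sig q x y P P' :
  Ctx f g c r K lam p N ell tau sig -> (q < K)%nat -> in01 x -> in01 y ->
  (forall s, Rmin x y <= s <= Rmax x y -> between (c (lam q)) (c (lam (S q))) (g s)) ->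
  p q <= P <= p (S q) -> f P = g x -> p q <= P' <= p (S q) -> f P' = g y -> Seg f g P x P' y.
Proof.
  intros [Hf [Hfm [Hg [Hgm [HL [[HW _] HG]]]]]] Hq Hx Hy Hr HP EP HP' EP'.
  destruct HW as [HK1 [Hadj [Hlr [P0 [PK [Hin Hst]]]]]].
  destruct (Hst q Hq) as [Hlt Hmono].
  destruct (Hin q ltac:(lia)) as [[A1 A2] F1]. destruct (Hin (S q) ltac:(lia)) as [[B1 B2] F2].
  apply (seg f g (p q) (p (S q)) x y P P'); auto.
  intros s Hs. rewrite F1, F2. auto.
Qed.

Lemma sig_in g c r N ell tau sig i : GWf g c r 0 0 N ell tau sig -> (i < N)%nat -> in01 (sig i).
Proof. intros [_ [_ [_ [_ [_ [Tin Tst]]]]]] Hi. destruct (Tst i Hi) as [_ [Hs _]].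
  destruct (Tin i ltac:(lia)) as [[A B] _]. destruct (Tin (S i) ltac:(lia)) as [[C D] _]. unfold in01; lra. Qed.

Lemma edge f g c r K lam p N ell tau sig m i a' b' :
  Ctx f g c r K lam p N ell tau sig -> (m <= K)%nat -> (i <= N)%nat -> lam m = ell i ->
  orng K a' m -> orng N b' i -> lam (mv a' m) = ell (mv b' i) ->
  Reach' f g (p m) (if b' then sig i else tau i) ->
  Reach' f g (p (mv a' m)) (if negb b' then sig (mv b' i) else tau (mv b' i)).
Proof.
  intros HC Hm Hi Hl Ha Hb Hl2 HR. apply (extend f g _ _ _ _ HR).
  pose proof HC as [Hf [Hfm [Hg [Hgm [HL [[HW _] HG]]]]]].
  pose proof HW as [HK1 [Hadj [Hlr [P0 [PK [Hin Hst]]]]]].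
  pose proof HG as [E0 [EN [Eadj [Er [T0 [Tin Tst]]]]]].
  destruct Ha as [Ha1 Ha2]. destruct Hb as [Hb1 Hb2].
  destruct a', b'; simpl in *.
  -
    specialize (Ha2 eq_refl). specialize (Hb2 eq_refl).
    destruct (Tst i Hb2) as [_ [Hs [Hgs [_ Hband]]]].
    destruct (Tin i Hi) as [_ Gti]. destruct (Tin (S i) ltac:(lia)) as [Iti1 Gti1].
    destruct (Hst m Ha2) as [Hlt _].
    destruct (Hin m Hm) as [_ Fm]. destruct (Hin (S m) ltac:(lia)) as [_ Fm1].
    apply (seg_strand f g c r K lam p N ell tau sig m); [exact HC|lia|apply (sig_in g c r N ell tau sig i); auto|exact Iti1| |lra|congruence|lra|congruence].
    intros s Hs'. rewrite Hl, Hl2. apply Hband. unfold Rmin, Rmax in Hs'.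
    destruct (Rle_dec (sig i) (tau (S i))); lra.
  -
    specialize (Ha2 eq_refl). specialize (Hb1 eq_refl).
    destruct i as [|i]; [lia|]. simpl in *.
    destruct (Tst i ltac:(lia)) as [_ [Hs [Hgs [_ Hband]]]].
    destruct (Tin (S i) Hi) as [Iti Gti].
    destruct (Hst m Ha2) as [Hlt _].
    destruct (Hin m Hm) as [_ Fm]. destruct (Hin (S m) ltac:(lia)) as [_ Fm1].
    apply (seg_strand f g c r K lam p N ell tau sig m); [exact HC|lia|exact Iti|apply (sig_in g c r N ell tau sig i); auto; lia| |lra|congruence|lra|congruence].
    intros s Hs'. rewrite Hl, Hl2. apply between_sym. apply Hband. unfold Rmin, Rmax in Hs'.
    destruct (Rle_dec (tau (S i)) (sig i)); lra.
  -
    specialize (Ha1 eq_refl). specialize (Hb2 eq_refl).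
    destruct m as [|m]; [lia|]. simpl in *.
    destruct (Tst i Hb2) as [_ [Hs [Hgs [_ Hband]]]].
    destruct (Tin i Hi) as [_ Gti]. destruct (Tin (S i) ltac:(lia)) as [Iti1 Gti1].
    destruct (Hst m ltac:(lia)) as [Hlt _].
    destruct (Hin (S m) Hm) as [_ Fm]. destruct (Hin m ltac:(lia)) as [_ Fm1].
    apply (seg_strand f g c r K lam p N ell tau sig m); [exact HC|lia|apply (sig_in g c r N ell tau sig i); auto|exact Iti1| |lra|congruence|lra|congruence].
    intros s Hs'. rewrite Hl, Hl2. apply between_sym. apply Hband. unfold Rmin, Rmax in Hs'.
    destruct (Rle_dec (sig i) (tau (S i))); lra.
  -
    specialize (Ha1 eq_refl). specialize (Hb1 eq_refl).
    destruct m as [|m]; [lia|]. destruct i as [|i]; [lia|]. simpl in *.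
    destruct (Tst i ltac:(lia)) as [_ [Hs [Hgs [_ Hband]]]].
    destruct (Tin (S i) Hi) as [Iti Gti].
    destruct (Hst m ltac:(lia)) as [Hlt _].
    destruct (Hin (S m) Hm) as [_ Fm]. destruct (Hin m ltac:(lia)) as [_ Fm1].
    apply (seg_strand f g c r K lam p N ell tau sig m); [exact HC|lia|exact Iti|apply (sig_in g c r N ell tau sig i); auto; lia| |lra|congruence|lra|congruence].
    intros s Hs'. rewrite Hl, Hl2. apply Hband. unfold Rmin, Rmax in Hs'.
    destruct (Rle_dec (tau (S i)) (sig i)); lra.
Qed.

Lemma loiter_gen f g c r K lam p N ell tau sig m i A B (b : bool) :
  Ctx f g c r K lam p N ell tau sig -> (m <= K)%nat -> (i < N)%nat -> lam m = ell i ->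
  0 <= A -> A < B -> B <= 1 -> (strict_incr_on f A B \/ strict_decr_on f A B) -> A <= p m <= B ->
  (forall z, c (ell i - 1)%nat <= z <= c (S (ell i)) -> between (f A) (f B) z) ->
  Reach' f g (p m) (if b then sig i else tau i) -> Reach' f g (p m) (if b then tau i else sig i).
Proof.
  intros HC Hm Hi Hl HA HAB HB Hmono HP Hz HR. apply (extend f g _ _ _ _ HR).
  pose proof HC as [Hf [Hfm [Hg [Hgm [HL [[HW _] HG]]]]]].
  pose proof HW as [HK1 [Hadj [Hlr [P0 [PK [Hin Hst]]]]]].
  pose proof HG as [E0 [EN [Eadj [Er [T0 [Tin Tst]]]]]].
  destruct (Tst i Hi) as [_ [Hs [Hgs [Hlo _]]]].
  destruct (Tin i ltac:(lia)) as [Iti Gti]. pose proof (sig_in g c r N ell tau sig i HG Hi) as Isi.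
  destruct (Hin m Hm) as [_ Fm].
  destruct b.
  - apply (seg f g A B (sig i) (tau i) (p m) (p m)); auto; try congruence.
    intros s Hs'. apply Hz. apply Hlo. unfold Rmin, Rmax in Hs'. destruct (Rle_dec (sig i) (tau i)); lra.
  - apply (seg f g A B (tau i) (sig i) (p m) (p m)); auto; try congruence.
    intros s Hs'. apply Hz. apply Hlo. unfold Rmin, Rmax in Hs'. destruct (Rle_dec (tau i) (sig i)); lra.
Qed.

Lemma loiter f g c r K lam p N ell tau sig m i (b : bool) :
  Ctx f g c r K lam p N ell tau sig -> (m <= K)%nat -> (i < N)%nat -> lam m = ell i ->
  (m = 0%nat \/ ((0 < m < K)%nat /\ lam (pred m) <> lam (S m))) ->
  Reach' f g (p m) (if b then sig i else tau i) -> Reach' f g (p m) (if b then tau i else sig i).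
Proof.
  intros HC Hm Hi Hl Hcase HR.
  pose proof HC as [Hf [Hfm [Hg [Hgm [HL [[HW HD] HG]]]]]].
  pose proof HW as [HK1 [Hadj [Hlr [P0 [PK [Hin Hst]]]]]].
  pose proof HL as [Hr [Hc0 [Hcr Hinc]]].
  destruct Hcase as [->|[Hm0 Hne]].
  - destruct HD as [L0 _]. rewrite L0 in Hl.
    assert (L1 : lam 1%nat = 1%nat) by (destruct (Hadj 0%nat ltac:(lia)); lia).
    destruct (Hst 0%nat ltac:(lia)) as [Hlt Hmono].
    destruct (Hin 0%nat ltac:(lia)) as [[A1 A2] F0]. destruct (Hin 1%nat ltac:(lia)) as [[B1 B2] F1].
    apply (loiter_gen f g c r K lam p N ell tau sig 0 i (p 0%nat) (p 1%nat) b); [exact HC|lia|exact Hi|rewrite L0; exact Hl|lra|lra|lra|exact Hmono|lra| |exact HR].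
    intros z Hz. rewrite <- Hl in Hz. simpl in Hz. rewrite F0, F1, L0, L1. apply between_l.
    left; apply Hinc; lia. lra.
  - destruct (adj_int K r lam m HD ltac:(lia) ltac:(lia)) as [Q1 Q2].
    destruct m as [|m]; [lia|]. simpl in *.
    destruct (Hst m ltac:(lia)) as [Hlt1 Hmono1]. destruct (Hst (S m) ltac:(lia)) as [Hlt2 Hmono2].
    destruct (Hin m ltac:(lia)) as [[A1 A2] FA]. destruct (Hin (S m) ltac:(lia)) as [[B1 B2] FB].
    destruct (Hin (S (S m)) ltac:(lia)) as [[C1 C2] FC].
    pose proof (Hlr (S m) ltac:(lia)). pose proof (Hlr m ltac:(lia)). pose proof (Hlr (S (S m)) ltac:(lia)).
    destruct Q1 as [Q1|Q1]; destruct Q2 as [Q2|Q2]; try lia.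
    +
      assert (Hl1 : (ell i - 1)%nat = lam (S (S m))) by lia.
      assert (c (lam (S (S m))) < c (lam (S m))) by (apply (lev_lt c r); auto; lia).
      assert (c (lam (S m)) < c (lam m)) by (apply (lev_lt c r); auto; lia).
      apply (loiter_gen f g c r K lam p N ell tau sig (S m) i (p m) (p (S (S m))) b); [exact HC|lia|exact Hi|exact Hl|lra|lra|lra| |lra| |exact HR].
      right. apply decr_union with (p (S m)).
      apply mono_dir_decr; auto. congruence. apply mono_dir_decr; auto. congruence.
      intros z Hz. rewrite FA, FC. rewrite Hl1 in Hz. rewrite <- Hl, <- Q1 in Hz.
      apply between_r; lra.
    +
      assert (Hl1 : (ell i - 1)%nat = lam m) by lia.
      assert (c (lam m) < c (lam (S m))) by (apply (lev_lt c r); auto; lia).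
      assert (c (lam (S m)) < c (lam (S (S m)))) by (apply (lev_lt c r); auto; lia).
      apply (loiter_gen f g c r K lam p N ell tau sig (S m) i (p m) (p (S (S m))) b); [exact HC|lia|exact Hi|exact Hl|lra|lra|lra| |lra| |exact HR].
      left. apply incr_union with (p (S m)).
      apply mono_dir_incr; auto. congruence. apply mono_dir_incr; auto. congruence.
      intros z Hz. rewrite FA, FC. rewrite Hl1 in Hz. rewrite <- Hl, <- Q2 in Hz.
      apply between_l; lra.
Qed.

Lemma realize f g c r K lam p N ell tau sig :
  Ctx f g c r K lam p N ell tau sig -> f 0 = 0 -> g 0 = 0 ->
  exists u v, cont01 u /\ cont01 v /\ maps01 u /\ maps01 v /\ u 0 = 0 /\ v 0 = 0 /\ u 1 = 1 /\
    forall t, in01 t -> f (u t) = g (v t).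
Proof.
  intros HC F0 G0.
  pose proof HC as [Hf [Hfm [Hg [Hgm [HL [[HW HD] HG]]]]]].
  pose proof HW as [HK1 [Hadj [Hlr [P0 [PK [Hin Hst]]]]]].
  pose proof HG as [E0 [EN [Eadj [Er [T0 [Tin Tst]]]]]].
  pose proof HL as [Hr [Hc0 [Hcr Hinc]]].
  assert (HDG : DWalk N r ell) by (split; auto).
  pose proof (K_pos N r ell HDG Hr) as HN1.
  destruct (dtrail K N r lam ell HD HDG Hr) as [T [HV [HNT HEnd]]].
  assert (Inv : forall j, (j <= T)%nat ->
     match it K N lam ell j with (m, i, a, b) => Reach' f g (p m) (if b then sig i else tau i) end).
  { induction j as [|j IH]; intros Hj.
    - simpl.
      assert (R0 : Reach' f g (p 0%nat) (tau 0%nat)).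
      { exists (fun _ => 0), (fun _ => 0).
        split; [apply cont01_const|]. split; [apply cont01_const|].
        split; [intros t Ht; unfold in01; lra|]. split; [intros t Ht; unfold in01; lra|].
        split; [auto|]. split; [auto|]. split; [auto|]. split; [auto|]. intros; congruence. }
      assert (HD0 := HD). destruct HD0 as [L0 _].
      assert (R1 : Reach' f g (p 0%nat) (sig 0%nat)).
      { apply (loiter f g c r K lam p N ell tau sig 0 0 false HC); auto; lia. }
      assert (L1 : lam 1%nat = 1%nat) by (destruct (Hadj 0%nat ltac:(lia)); lia).
      assert (G1 : ell 1%nat = 1%nat) by (destruct (Eadj 0%nat ltac:(lia)); lia).
      assert (Oa : orng K true 0%nat) by (unfold orng; split; intros; [discriminate|lia]).
      assert (Ob : orng N true 0%nat) by (unfold orng; split; intros; [discriminate|lia]).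
      pose proof (edge f g c r K lam p N ell tau sig 0 0 true true HC ltac:(lia) ltac:(lia) ltac:(congruence) Oa Ob ltac:(simpl; congruence) R1) as R2.
      simpl in R2. exact R2.
    - specialize (IH ltac:(lia)). simpl.
      pose proof (HV j ltac:(lia)) as Vj. pose proof (HNT j ltac:(lia)) as Nj.
      destruct (it K N lam ell j) as [[[m i] a] b] eqn:Ej.
      pose proof (rule_ok K N r lam ell m i a b HD HDG Hr Vj Nj) as RO. simpl in RO.
      destruct (rule K N lam ell m i a b) as [a' b'] eqn:ER. simpl in RO. destruct RO as [Oa [Ob Ol]].
      destruct Vj as [Hm [Hi [_ [_ [Hl _]]]]].
      assert (Rb : Reach' f g (p m) (if b' then sig i else tau i)).
      { destruct (Bool.bool_dec b b') as [<-|Hbb]; auto.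
        assert (Hft : fturn K lam m = false).
        { destruct (fturn K lam m) eqn:Eft; auto. unfold rule in ER. rewrite Eft in ER. inversion ER; congruence. }
        unfold fturn in Hft. unfold Term in Nj; simpl in Nj.
        assert (HiN : (i < N)%nat).
        { destruct (Nat.eq_dec i N) as [->|]; [|lia]. exfalso.
          rewrite EN in Hl.
          destruct (Nat.eq_dec m K) as [->|]; [tauto|].
          destruct (Nat.eq_dec m 0) as [->|]. destruct HD as [L0 _]. lia.
          rewrite (proj2 (Nat.ltb_lt 0 m)), (proj2 (Nat.ltb_lt m K)) in Hft by lia.
          rewrite (lam_top K r lam m HD ltac:(lia) ltac:(lia) Hl), Nat.eqb_refl in Hft. discriminate. }
        assert (Hcase : m = 0%nat \/ ((0 < m < K)%nat /\ lam (pred m) <> lam (S m))).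
        { destruct (Nat.eq_dec m 0) as [->|]; [auto|right].
          destruct (Nat.eq_dec m K) as [->|].
          { exfalso. destruct (Tst i HiN) as [Hlt _]. destruct HD as [_ [LK _]]. lia. }
          split; [lia|]. intro E. rewrite (proj2 (Nat.ltb_lt 0 m)), (proj2 (Nat.ltb_lt m K)), E, Nat.eqb_refl in Hft by lia.
          discriminate. }
        pose proof (loiter f g c r K lam p N ell tau sig m i b HC Hm HiN Hl Hcase IH) as R.
        destruct b, b'; try congruence; auto. }
      unfold next. rewrite ER. apply (edge f g c r K lam p N ell tau sig m i a' b' HC); auto. }
  specialize (Inv T ltac:(lia)). destruct (it K N lam ell T) as [[[m i] a] b]. simpl in HEnd.
  inversion HEnd; subst m i.
  destruct Inv as [u [v [Hu [Hv [Mu [Mv [U0 [V0 [U1 [V1 R]]]]]]]]]].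
  exists u, v. repeat (split; auto). congruence.
Qed.

Lemma MC f g : cont01 f -> maps01 f -> piecewise_monotone f -> f 0 = 0 -> f 1 = 1 ->
  cont01 g -> maps01 g -> g 0 = 0 -> g 1 = 1 ->
  exists u v, cont01 u /\ cont01 v /\ maps01 u /\ maps01 v /\ u 0 = 0 /\ v 0 = 0 /\ u 1 = 1 /\
    forall t, in01 t -> f (u t) = g (v t).
Proof.
  intros Hf Hfm Hpm F0 F1 Hg Hgm G0 G1.
  destruct (fwalk f Hf Hfm Hpm F0 F1 g Hg Hgm G0 G1) as [c [r [K [lam [p [N [ell [tau [sig [HL [HFW HGW]]]]]]]]]]].
  apply (realize f g c r K lam p N ell tau sig); auto.
  unfold Ctx; tauto.
Qed.

Lemma maps01_comp f h : maps01 f -> maps01 h -> maps01 (fun t => f (h t)).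
Proof. intros Hf Hh t Ht. apply Hf, Hh, Ht. Qed.

Theorem proposition1 (gamma : R -> R * R) :
  cont01 (fun s => fst (gamma s)) -> cont01 (fun s => snd (gamma s)) ->
  (forall s, in01 s -> in01 (fst (gamma s)) /\ in01 (snd (gamma s))) ->
  gamma 0 = (0, 0) -> gamma 1 = (1, 1) ->
  classU (fun s => snd (gamma s)) ->
  forall n : nat, (1 <= n)%nat ->
  exists (y : R -> R) (x : nat -> R -> R),
    (forall t, x 0%nat t = 0) /\
    cont01 y /\ maps01 y /\
    (forall i, (1 <= i <= n)%nat -> cont01 (x i) /\ maps01 (x i)) /\
    (forall t i, in01 t -> (1 <= i <= n)%nat ->
       on_curve gamma (x i t, x (i - 1)%nat t + y t)) /\
    (forall i, (1 <= i <= n)%nat -> x i 0 = 0) /\ y 0 = 0 /\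
    (x n 1, x (n - 1)%nat 1 + y 1) = (1, 1).
Proof.
  intros HG HF Hrange Hg0 Hg1 [_ [_ [Hpm _]]].
  set (F := fun s => snd (gamma s)). set (G := fun s => fst (gamma s)).
  assert (F0 : F 0 = 0) by (unfold F; rewrite Hg0; auto).
  assert (F1 : F 1 = 1) by (unfold F; rewrite Hg1; auto).
  assert (G0 : G 0 = 0) by (unfold G; rewrite Hg0; auto).
  assert (G1 : G 1 = 1) by (unfold G; rewrite Hg1; auto).
  assert (FM : maps01 F) by (intros s Hs; apply Hrange; auto).
  assert (GM : maps01 G) by (intros s Hs; apply Hrange; auto).
  assert (Hcurve : forall s, in01 s -> on_curve gamma (G s, F s)).
  { intros s Hs. exists s; split; auto. unfold F, G. destruct (gamma s); auto. }
  intros n Hn. induction n as [|n IH]; [lia|].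
  destruct (Nat.eq_dec n 0) as [->|Hn0].
  - exists F, (fun i t => if (i =? 0)%nat then 0 else G t).
    split; [auto|]. split; [exact HF|]. split; [exact FM|].
    split. { intros i Hi. destruct i; [lia|]. simpl. split; [exact HG|exact GM]. }
    split. { intros t i Ht Hi. replace i with 1%nat by lia. simpl. rewrite Rplus_0_l. apply Hcurve; auto. }
    split. { intros i Hi. destruct i; [lia|]. simpl. auto. }
    split; [auto|]. simpl. rewrite Rplus_0_l, G1, F1. auto.
  - destruct (IH ltac:(lia)) as [y [x [X0 [Hy [My [Hx [Hon [Hx0 [Hy0 Hend]]]]]]]]].
    injection Hend as Hxn1 Hxn2.
    set (Kf := fun t => x n t + y t).
    destruct (Hx n ltac:(lia)) as [Hxn Mxn].
    assert (HK : cont01 Kf) by (apply cont01_plus; auto).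
    assert (I0 : in01 0) by (unfold in01; lra). assert (I1 : in01 1) by (unfold in01; lra).
    assert (K0 : Kf 0 = 0). { unfold Kf. rewrite Hx0, Hy0 by lia. ring. }
    assert (K1 : 1 <= Kf 1). { unfold Kf. rewrite Hxn1. pose proof (My 1 I1). unfold in01 in *; lra. }
    assert (Kpos : forall t, in01 t -> 0 <= Kf t).
    { intros t Ht. unfold Kf. pose proof (Mxn t Ht). pose proof (My t Ht). unfold in01 in *; lra. }
    destruct (ivt01 Kf 0 1 1 HK ltac:(lra) ltac:(lra) ltac:(lra) ltac:(left; lra)) as [b [Hb Kb]].
    destruct (first_hit Kf 0 b 1 HK ltac:(lra) ltac:(lra) ltac:(lra) Kb) as [sg [Hsg [Ksg Hbef]]].
    assert (Hsg0 : 0 < sg). { destruct (Req_dec sg 0) as [E|]; [|lra]. rewrite E, K0 in Ksg. lra. }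
    assert (Kle : forall t, 0 <= t <= sg -> Kf t <= 1).
    { intros t Ht. destruct (Req_dec t sg) as [->|Hne]; [lra|].
      destruct (Rle_dec (Kf t) 1) as [|Hgt]; auto. exfalso.
      destruct (ivt01 Kf 0 t 1 HK ltac:(lra) ltac:(lra) ltac:(lra) ltac:(left; lra)) as [w [Hw Kw]].
      apply (Hbef w); auto; lra. }
    set (phi := fun w => sg * w).
    assert (Hphi : cont01 phi) by (apply cont01_scal, cont01_id).
    assert (Mphi : maps01 phi) by (intros w Hw; unfold phi, in01 in *; nra).
    set (gg := fun w => Kf (phi w)).
    assert (Hgg : cont01 gg) by (unfold gg; apply (cont01_comp Kf phi); auto).
    assert (Mgg : maps01 gg).
    { intros w Hw. unfold gg. split. apply Kpos, Mphi, Hw. apply Kle. unfold phi, in01 in *; nra. }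
    assert (gg0 : gg 0 = 0) by (unfold gg, phi; rewrite Rmult_0_r; auto).
    assert (gg1 : gg 1 = 1) by (unfold gg, phi; rewrite Rmult_1_r; auto).
    destruct (MC F gg HF FM Hpm F0 F1 Hgg Mgg gg0 gg1) as [u [v [Hu [Hv [Mu [Mv [U0 [V0 [U1 Rel]]]]]]]]].
    set (ph := fun t => phi (v t)).
    assert (Hph : cont01 ph) by (unfold ph; apply (cont01_comp phi v); auto).
    assert (Mph : maps01 ph) by (unfold ph; apply (maps01_comp phi v); auto).
    assert (ph0 : ph 0 = 0) by (unfold ph, phi; rewrite V0; ring).
    exists (fun t => y (ph t)), (fun i t => if (i <=? n)%nat then x i (ph t) else G (u t)).
    split. { intros t. simpl. apply X0. }
    split. { apply cont01_comp; auto. }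
    split. { apply maps01_comp; auto. }
    split.
    { intros i Hi. destruct (Nat.leb_spec i n).
      - destruct (Hx i ltac:(lia)). split; [apply cont01_comp|apply maps01_comp]; auto.
      - split; [apply cont01_comp|apply maps01_comp]; auto. }
    split.
    { intros t i Ht Hi. destruct (Nat.leb_spec i n).
      - destruct (Nat.leb_spec (i - 1) n); [|lia]. apply Hon; [apply Mph; auto|lia].
      - destruct (Nat.leb_spec (i - 1) n); [|lia]. replace (i - 1)%nat with n by lia.
        pose proof (Rel t Ht) as E. unfold gg in E. fold (ph t) in E. unfold Kf in E.
        rewrite <- E. apply Hcurve. apply Mu; auto. }
    split.
    { intros i Hi. destruct (Nat.leb_spec i n). rewrite ph0. apply Hx0; lia. rewrite U0; auto. }
    split. { rewrite ph0; auto. }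
    destruct (Nat.leb_spec (S n) n); [lia|].
    replace (S n - 1)%nat with n by lia. destruct (Nat.leb_spec n n); [|lia].
    rewrite U1, G1. f_equal.
    pose proof (Rel 1 I1) as E. unfold gg in E. fold (ph 1) in E. unfold Kf in E. rewrite <- E, U1; auto.
Qed.
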